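(* Let $T(x,y)=(x+\alpha,\,py+f(x))$ on $\mathbb T^2$ with $\alpha$ irrational and $p$ an integer with $|p|\ge2$, and let $\mu$ be the probability measure supported on the graph $\{(x,\gamma(x))\}$ of $\gamma:\mathbb T\to\mathbb T$ which projects to Lebesgue measure on the first coordinate. If $f$ and $\gamma$ are real analytic, then either $T^n_*\mu$ converges weak$^*$ to Lebesgue measure on $\mathbb T^2$, or there is a constant $c$ such that $f(x)=\gamma(x+\alpha)-p\gamma(x)+c$ for all $x\in\mathbb T$.
   Context: $\mathbb T=\mathbb R/\mathbb Z$; $T^n_*\mu$ denotes the push-forward of $\mu$ under $T^n$. *)

(* Defs.v *)
From Stdlib Require Import Reals Lra ZArith ClassicalEpsilon.
Open Scope R_scope.

(* Riemann integral of g over [a,b] (0 if g is not Riemann integrable there;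
   the value does not depend on the integrability witness, RiemannInt_P5). *)
Definition Rint (g : R -> R) (a b : R) : R :=
  match excluded_middle_informative (inhabited (Riemann_integrable g a b)) with
  | left H => RiemannInt (epsilon H (fun _ => True))
  | right _ => 0
  end.

Definition irrational (a : R) : Prop :=
  forall (m n : Z), n <> 0%Z -> a * IZR n <> IZR m.

Definition real_analytic (F : R -> R) : Prop :=
  forall x0 : R, exists r : R, 0 < r /\ exists an : nat -> R,
    forall x, Rabs (x - x0) < r -> Pser an (x - x0) (F x).

(* F : R -> R is the lift of a map T -> T (T = R/Z) *)
Definition circle_lift (F : R -> R) : Prop :=
  forall x, exists k : Z, F (x + 1) = F x + IZR k.

(* continuous functions on T^2, as doubly 1-periodic jointly continuous
   functions R -> R -> R *)
Definition cont_T2 (phi : R -> R -> R) : Prop :=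
  (forall x y, phi (x + 1) y = phi x y /\ phi x (y + 1) = phi x y) /\
  (forall x y eps, 0 < eps -> exists delta, 0 < delta /\
     forall x' y', Rabs (x' - x) < delta -> Rabs (y' - y) < delta ->
       Rabs (phi x' y' - phi x y) < eps).

(* second coordinate (lifted) of T^n (x, Gamma x), where
   T(x,y) = (x + alpha, p y + F x) *)
Fixpoint orbit_y (alpha p : R) (F Gamma : R -> R) (n : nat) (x : R) : R :=
  match n with
  | O => Gamma x
  | S k => p * orbit_y alpha p F Gamma k x + F (x + INR k * alpha)
  end.

(* integral of phi against T^n_* mu, mu = graph measure of Gamma over Lebesgue *)
Definition push_integral (alpha p : R) (F Gamma : R -> R) (n : nat)
  (phi : R -> R -> R) : R :=
  Rint (fun x => phi (x + INR n * alpha) (orbit_y alpha p F Gamma n x)) 0 1.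

Definition leb_T2 (phi : R -> R -> R) : R :=
  Rint (fun x => Rint (fun y => phi x y) 0 1) 0 1.

Definition pushforward_equidistributes (alpha p : R) (F Gamma : R -> R) : Prop :=
  forall phi, cont_T2 phi ->
    Un_cv (fun n => push_integral alpha p F Gamma n phi) (leb_T2 phi).

(* Main.v *)
Require Import Defs.
From Stdlib Require Import Reals Lra Lia ZArith Classical ClassicalEpsilon FunctionalExtensionality.
Open Scope R_scope.

Lemma cv_le_ev (a b : nat -> R) la lb N :
  Un_cv a la -> Un_cv b lb -> (forall n, (n >= N)%nat -> a n <= b n) -> la <= lb.
Proof.
  intros Ha Hb H. destruct (Rle_lt_dec la lb) as [h|h]; auto.
  set (e := (la - lb)/2). assert (e > 0) by (unfold e; lra).
  destruct (Ha e H0) as [N1 H1]. destruct (Hb e H0) as [N2 H2].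
  set (n := (N + N1 + N2)%nat).
  specialize (H1 n ltac:(unfold n; lia)). specialize (H2 n ltac:(unfold n; lia)).
  specialize (H n ltac:(unfold n; lia)). unfold Rdist in *.
  apply Rabs_def2 in H1. apply Rabs_def2 in H2. unfold e in *; lra.
Qed.

Lemma cv_const_le (a : nat -> R) la c N :
  Un_cv a la -> (forall n, (n >= N)%nat -> a n <= c) -> la <= c.
Proof.
  intros Ha H. apply (cv_le_ev a (fun _ => c) la c N Ha); auto.
  intros e He; exists 0%nat; intros; unfold Rdist; rewrite Rminus_diag, Rabs_R0; lra.
Qed.

Lemma cv_const_ge (a : nat -> R) la c N :
  Un_cv a la -> (forall n, (n >= N)%nat -> c <= a n) -> c <= la.
Proof.
  intros Ha H. apply (cv_le_ev (fun _ => c) a c la N); auto.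
  intros e He; exists 0%nat; intros; unfold Rdist; rewrite Rminus_diag, Rabs_R0; lra.
Qed.

Lemma cv_unique a l1 l2 : Un_cv a l1 -> Un_cv a l2 -> l1 = l2.
Proof. apply UL_sequence. Qed.

Lemma cv_scal a l c : Un_cv a l -> Un_cv (fun n => c * a n) (c * l).
Proof.
  intros H. apply CV_mult; auto. intros e He; exists 0%nat; intros; unfold Rdist;
  rewrite Rminus_diag, Rabs_R0; lra.
Qed.

Lemma cv_ext a b l : (forall n, a n = b n) -> Un_cv a l -> Un_cv b l.
Proof. intros E H e He; destruct (H e He) as [N HN]; exists N; intros; rewrite <- E; auto. Qed.

Lemma is_ext u v l : (forall n, u n = v n) -> infinite_sum u l -> infinite_sum v l.
Proof.
  intros E H. apply (cv_ext (fun N => sum_f_R0 u N)); auto.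
  intro; apply sum_eq; auto.
Qed.

Lemma is_plus u v a b : infinite_sum u a -> infinite_sum v b ->
  infinite_sum (fun n => u n + v n) (a + b).
Proof.
  intros Hu Hv. apply (cv_ext (fun N => sum_f_R0 u N + sum_f_R0 v N)).
  - intro; rewrite plus_sum; auto.
  - apply CV_plus; auto.
Qed.

Lemma is_scal u a c : infinite_sum u a -> infinite_sum (fun n => c * u n) (c * a).
Proof.
  intros Hu. apply (cv_ext (fun N => c * sum_f_R0 u N)).
  - intro; rewrite scal_sum; apply sum_eq; intros; ring.
  - apply cv_scal; auto.
Qed.

Lemma is_opp u a : infinite_sum u a -> infinite_sum (fun n => - u n) (- a).
Proof.
  intros H. replace (-a) with (-1 * a) by ring.
  apply is_ext with (fun n => -1 * u n); [intros; ring|]. apply is_scal; auto.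
Qed.

Lemma is_minus u v a b : infinite_sum u a -> infinite_sum v b ->
  infinite_sum (fun n => u n - v n) (a - b).
Proof. intros; apply is_plus; auto; apply is_opp; auto. Qed.

Lemma is_unique u a b : infinite_sum u a -> infinite_sum u b -> a = b.
Proof. apply uniqueness_sum. Qed.

Lemma sum_f_R0_nonneg u N : (forall n, 0 <= u n) -> 0 <= sum_f_R0 u N.
Proof. intros H; induction N; simpl; auto. specialize (H (S N)); lra. Qed.

Lemma is_nonneg_le u l N : (forall n, 0 <= u n) -> infinite_sum u l -> sum_f_R0 u N <= l.
Proof.
  intros Hp Hl. apply (cv_const_ge _ _ _ N Hl). intros n Hn.
  induction Hn; [lra|]. simpl. specialize (Hp (S m)); lra.
Qed.

Lemma is_nonneg u l : (forall n, 0 <= u n) -> infinite_sum u l -> 0 <= l.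
Proof.
  intros Hp Hl. apply Rle_trans with (sum_f_R0 u 0). simpl; auto. apply is_nonneg_le; auto.
Qed.

Lemma is_le u v a b : (forall n, u n <= v n) -> infinite_sum u a -> infinite_sum v b -> a <= b.
Proof.
  intros H Ha Hb. apply (cv_le_ev _ _ _ _ 0 Ha Hb). intros; apply sum_Rle; auto.
Qed.

Lemma is_comp u v L : (forall n, Rabs (u n) <= v n) -> infinite_sum v L ->
  exists l, infinite_sum u l /\ Rabs l <= L.
Proof.
  intros H HL.
  assert (Hv : {l | Un_cv (fun N => sum_f_R0 v N) l}) by (exists L; auto).
  assert (Ha : {l | Un_cv (fun N => sum_f_R0 (fun n => Rabs (u n)) N) l}).
  { apply Rseries_CV_comp with v; auto. intros; split; auto; apply Rabs_pos. }
  assert (Hc := cv_cauchy_1 _ Ha). apply cauchy_abs in Hc.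
  destruct (cv_cauchy_2 _ Hc) as [l Hl]. exists l; split; auto.
  destruct Ha as [la Hla].
  assert (Rabs l <= la).
  { apply (cv_le_ev (fun N => Rabs (sum_f_R0 u N)) (fun N => sum_f_R0 (fun n => Rabs (u n)) N) _ _ 0); auto.
    apply cv_cvabs; auto. intros; apply Rsum_abs. }
  assert (la <= L). { apply (cv_le_ev _ _ _ _ 0 Hla HL). intros; apply sum_Rle; auto. }
  lra.
Qed.

Lemma is_exists_abs u v L : (forall n, Rabs (u n) <= v n) -> infinite_sum v L ->
  exists l, infinite_sum u l.
Proof. intros H HL; destruct (is_comp u v L H HL) as [l [? ?]]; eauto. Qed.

Lemma is_geom q C : 0 <= q < 1 -> infinite_sum (fun n => C * q ^ n) (C / (1 - q)).
Proof.
  intros Hq. unfold Rdiv. apply is_scal.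
  assert (H := GP_infinite q ltac:(rewrite Rabs_pos_eq; lra)). unfold Pser in H.
  apply is_ext with (fun n => 1 * q ^ n); auto. intros; ring.
Qed.

Lemma sum_shift u N : sum_f_R0 u (S N) = u 0%nat + sum_f_R0 (fun n => u (S n)) N.
Proof. induction N; simpl in *; [ring|]. rewrite IHN. ring. Qed.

Lemma is_shift u l : infinite_sum u l -> infinite_sum (fun n => u (S n)) (l - u 0%nat).
Proof.
  intros H e He. destruct (H e He) as [N HN]. exists N. intros n Hn.
  specialize (HN (S n) ltac:(lia)). rewrite sum_shift in HN. unfold Rdist in *.
  replace (sum_f_R0 (fun n0 : nat => u (S n0)) n - (l - u 0%nat)) with
    (u 0%nat + sum_f_R0 (fun n0 : nat => u (S n0)) n - l) by ring. auto.
Qed.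

Lemma is_unshift u l : infinite_sum (fun n => u (S n)) l -> infinite_sum u (u 0%nat + l).
Proof.
  intros H e He. destruct (H e He) as [N HN]. exists (S N). intros n Hn.
  destruct n; [lia|]. specialize (HN n ltac:(lia)). rewrite sum_shift. unfold Rdist in *.
  replace (u 0%nat + sum_f_R0 (fun n0 : nat => u (S n0)) n - (u 0%nat + l)) with
    (sum_f_R0 (fun n0 : nat => u (S n0)) n - l) by ring. auto.
Qed.

Lemma sum_split_d u N d :
  sum_f_R0 u (S N + d) = sum_f_R0 u N + sum_f_R0 (fun k => u (S N + k)%nat) d.
Proof.
  induction d.
  - rewrite Nat.add_0_r. simpl. rewrite Nat.add_0_r. reflexivity.
  - replace (S N + S d)%nat with (S (S N + d)) by lia.
    change (sum_f_R0 u (S (S N + d))) with (sum_f_R0 u (S N + d) + u (S (S N + d))).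
    rewrite IHd. simpl. replace (N + S d)%nat with (S (N + d)) by lia. ring.
Qed.

Lemma sum_split u N M : (N <= M)%nat ->
  sum_f_R0 u M = sum_f_R0 u N + sum_f_R0 (fun k => u (S N + k)%nat) (M - S N) \/ N = M.
Proof.
  intros H. destruct (Nat.eq_dec N M); [right; auto|left].
  replace M with (S N + (M - S N))%nat at 1 by lia. apply sum_split_d.
Qed.

Lemma is_tail_bound u v l L N : (forall n, Rabs (u n) <= v n) ->
  infinite_sum u l -> infinite_sum v L ->
  Rabs (l - sum_f_R0 u N) <= L - sum_f_R0 v N.
Proof.
  intros H Hu Hv.
  assert (Hu' : Un_cv (fun M => Rabs (sum_f_R0 u M - sum_f_R0 u N)) (Rabs (l - sum_f_R0 u N))).
  { apply cv_cvabs. apply CV_minus; auto. intros e He; exists 0%nat; intros;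
    unfold Rdist; rewrite Rminus_diag, Rabs_R0; lra. }
  assert (Hv' : Un_cv (fun M => sum_f_R0 v M - sum_f_R0 v N) (L - sum_f_R0 v N)).
  { apply CV_minus; auto. intros e He; exists 0%nat; intros;
    unfold Rdist; rewrite Rminus_diag, Rabs_R0; lra. }
  apply (cv_le_ev _ _ _ _ N Hu' Hv'). intros M HM.
  destruct (Nat.eq_dec N M) as [EE|NE]; [subst; rewrite !Rminus_diag, Rabs_R0; lra|].
  destruct (sum_split u N M HM) as [E|E]; [|lia].
  destruct (sum_split v N M HM) as [E'|E']; [|lia].
  rewrite E, E'. replace (sum_f_R0 u N + sum_f_R0 (fun k : nat => u (S N + k)%nat) (M - S N) - sum_f_R0 u N)
    with (sum_f_R0 (fun k : nat => u (S N + k)%nat) (M - S N)) by ring.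
  replace (sum_f_R0 v N + sum_f_R0 (fun k : nat => v (S N + k)%nat) (M - S N) - sum_f_R0 v N)
    with (sum_f_R0 (fun k : nat => v (S N + k)%nat) (M - S N)) by ring.
  eapply Rle_trans; [apply Rsum_abs|]. apply sum_Rle; auto.
Qed.

Lemma sum_geom q N : q <> 1 -> sum_f_R0 (fun n => q ^ n) N = (1 - q ^ S N) / (1 - q).
Proof.
  intros Hq. induction N; simpl in *. field; lra. rewrite IHN. field. lra.
Qed.

Lemma Rabs_le_inv x a : Rabs x <= a -> -a <= x <= a.
Proof. intros H. unfold Rabs in H; destruct (Rcase_abs x); lra. Qed.
Lemma Rabs_lt_inv x a : Rabs x < a -> -a < x < a.
Proof. intros H. unfold Rabs in H; destruct (Rcase_abs x); lra. Qed.

Lemma div_nonneg a b : 0 <= a -> 0 < b -> 0 <= a / b.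
Proof. intros. unfold Rdiv. apply Rmult_le_pos; auto. left; apply Rinv_0_lt_compat; auto. Qed.
Lemma div_lt1 a b : 0 <= a < b -> a / b < 1.
Proof. intros. apply Rmult_lt_reg_r with b; [lra|]. unfold Rdiv. rewrite Rmult_assoc, Rinv_l; lra. Qed.
Lemma pow_le1 x n : 0 <= x <= 1 -> x ^ n <= 1.
Proof. intros. rewrite <- (pow1 n). apply pow_incr; lra. Qed.
Lemma pow_mono_dec x m n : 0 <= x <= 1 -> (m <= n)%nat -> x ^ n <= x ^ m.
Proof.
  intros Hx Hmn. replace n with (m + (n - m))%nat by lia. rewrite pow_add.
  rewrite <- (Rmult_1_r (x ^ m)) at 2. apply Rmult_le_compat_l. apply pow_le; lra.
  apply pow_le1; auto.
Qed.
Lemma sum_ge_term u N k : (forall n, 0 <= u n) -> (k <= N)%nat -> u k <= sum_f_R0 u N.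
Proof.
  intros H Hk. induction N.
  - replace k with 0%nat by lia. simpl; lra.
  - destruct (Nat.eq_dec k (S N)) as [->|Hne].
    + simpl. assert (0 <= sum_f_R0 u N) by (apply sum_f_R0_nonneg; auto). lra.
    + simpl. specialize (H (S N)). assert (u k <= sum_f_R0 u N) by (apply IHN; lia). lra.
Qed.

Lemma dpl_plus f g x a b : derivable_pt_lim f x a -> derivable_pt_lim g x b ->
  derivable_pt_lim (fun y => f y + g y) x (a + b).
Proof. intros; apply (derivable_pt_lim_plus f g x a b); auto. Qed.
Lemma dpl_minus f g x a b : derivable_pt_lim f x a -> derivable_pt_lim g x b ->
  derivable_pt_lim (fun y => f y - g y) x (a - b).
Proof. intros; apply (derivable_pt_lim_minus f g x a b); auto. Qed.
Lemma dpl_scal f x a c : derivable_pt_lim f x a ->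
  derivable_pt_lim (fun y => c * f y) x (c * a).
Proof. intros; apply (derivable_pt_lim_scal f c x a); auto. Qed.
Lemma dpl_const c x : derivable_pt_lim (fun _ => c) x 0.
Proof. apply (derivable_pt_lim_const c x). Qed.
Lemma dpl_id x : derivable_pt_lim (fun y => y) x 1.
Proof. apply (derivable_pt_lim_id x). Qed.
Lemma dpl_comp f g x a b : derivable_pt_lim f x a -> derivable_pt_lim g (f x) b ->
  derivable_pt_lim (fun y => g (f y)) x (b * a).
Proof. intros; apply (derivable_pt_lim_comp f g x a b); auto. Qed.
Lemma dpl_shift f c x a : derivable_pt_lim f (x + c) a ->
  derivable_pt_lim (fun y => f (y + c)) x a.
Proof.
  intros H. replace a with (a * (1 + 0)) by ring. apply dpl_comp; auto.
  apply dpl_plus; [apply dpl_id | apply dpl_const].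
Qed.
Lemma dpl_ext f g x a : (forall y, f y = g y) -> derivable_pt_lim f x a -> derivable_pt_lim g x a.
Proof. intros E H. replace g with f; auto. apply functional_extensionality; auto. Qed.
Lemma dpl_unique f x a b : derivable_pt_lim f x a -> derivable_pt_lim f x b -> a = b.
Proof. apply uniqueness_limite. Qed.
Lemma dpl_cont f x a : derivable_pt_lim f x a -> continuity_pt f x.
Proof. intros H; apply derivable_continuous_pt; exists a; auto. Qed.

Lemma cpt_plus f g x : continuity_pt f x -> continuity_pt g x -> continuity_pt (fun y => f y + g y) x.
Proof. intros; apply (continuity_pt_plus f g); auto. Qed.
Lemma cpt_minus f g x : continuity_pt f x -> continuity_pt g x -> continuity_pt (fun y => f y - g y) x.
Proof. intros; apply (continuity_pt_minus f g); auto. Qed.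
Lemma cpt_scal f c x : continuity_pt f x -> continuity_pt (fun y => c * f y) x.
Proof. intros; apply (continuity_pt_scal f c); auto. Qed.
Lemma cpt_mult f g x : continuity_pt f x -> continuity_pt g x -> continuity_pt (fun y => f y * g y) x.
Proof. intros; apply (continuity_pt_mult f g); auto. Qed.
Lemma cpt_const c x : continuity_pt (fun _ => c) x.
Proof. apply (continuity_pt_const (fun _ => c)). intros a b; auto. Qed.
Lemma cpt_id x : continuity_pt (fun y => y) x.
Proof. apply derivable_continuous_pt, derivable_pt_id. Qed.
Lemma cpt_comp f g x : continuity_pt f x -> continuity_pt g (f x) -> continuity_pt (fun y => g (f y)) x.
Proof. intros; apply (continuity_pt_comp f g); auto. Qed.
Lemma cpt_shift f c x : continuity_pt f (x + c) -> continuity_pt (fun y => f (y + c)) x.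
Proof. intros; apply cpt_comp; auto. apply cpt_plus; [apply cpt_id|apply cpt_const]. Qed.
Lemma cpt_abs f x : continuity_pt f x -> continuity_pt (fun y => Rabs (f y)) x.
Proof. intros; apply cpt_comp; auto. apply Rcontinuity_abs. Qed.
Lemma cpt_ext f g x : (forall y, f y = g y) -> continuity_pt f x -> continuity_pt g x.
Proof. intros E H. replace g with f; auto. apply functional_extensionality; auto. Qed.

Definition contR (g : R -> R) := forall x, continuity_pt g x.

Lemma Rint_eq g a b (pr : Riemann_integrable g a b) : Rint g a b = RiemannInt pr.
Proof.
  unfold Rint. destruct (excluded_middle_informative _) as [H|H].
  - apply RiemannInt_P5.
  - exfalso; apply H; constructor; auto.
Qed.

Lemma contR_int g a b : contR g -> Riemann_integrable g a b.
Proof.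
  intros H. destruct (Rle_dec a b).
  - apply continuity_implies_RiemannInt; auto.
  - apply RiemannInt_P1. apply continuity_implies_RiemannInt; auto; lra.
Qed.

Lemma Rint_chasles g a b c : contR g -> Rint g a b + Rint g b c = Rint g a c.
Proof.
  intros H. rewrite (Rint_eq g a b (contR_int g a b H)), (Rint_eq g b c (contR_int g b c H)),
    (Rint_eq g a c (contR_int g a c H)). apply RiemannInt_P26.
Qed.

Lemma Rint_lin f g l a b : contR f -> contR g ->
  Rint (fun x => f x + l * g x) a b = Rint f a b + l * Rint g a b.
Proof.
  intros Hf Hg. rewrite (Rint_eq f a b (contR_int f a b Hf)), (Rint_eq g a b (contR_int g a b Hg)).
  rewrite (Rint_eq _ a b (RiemannInt_P10 l (contR_int f a b Hf) (contR_int g a b Hg))).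
  apply RiemannInt_P13.
Qed.

Lemma contR_plus f g : contR f -> contR g -> contR (fun x => f x + g x).
Proof. intros ? ? x; apply cpt_plus; auto. Qed.
Lemma contR_minus f g : contR f -> contR g -> contR (fun x => f x - g x).
Proof. intros ? ? x; apply cpt_minus; auto. Qed.
Lemma contR_scal f c : contR f -> contR (fun x => c * f x).
Proof. intros ? x; apply cpt_scal; auto. Qed.
Lemma contR_const c : contR (fun _ => c).
Proof. intros x; apply cpt_const. Qed.
Lemma contR_shift f c : contR f -> contR (fun x => f (x + c)).
Proof. intros ? x; apply cpt_shift; auto. Qed.
Lemma contR_mult f g : contR f -> contR g -> contR (fun x => f x * g x).
Proof. intros ? ? x; apply cpt_mult; auto. Qed.

Lemma Rint_plus f g a b : contR f -> contR g ->
  Rint (fun x => f x + g x) a b = Rint f a b + Rint g a b.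
Proof.
  intros. rewrite <- (Rmult_1_l (Rint g a b)), <- Rint_lin; auto.
  f_equal; apply functional_extensionality; intros; ring.
Qed.
Lemma Rint_minus f g a b : contR f -> contR g ->
  Rint (fun x => f x - g x) a b = Rint f a b - Rint g a b.
Proof.
  intros. replace (Rint f a b - Rint g a b) with (Rint f a b + -1 * Rint g a b) by ring.
  rewrite <- Rint_lin; auto. f_equal; apply functional_extensionality; intros; ring.
Qed.

Lemma Rint_const c a b : Rint (fun _ => c) a b = c * (b - a).
Proof.
  change (Rint (fct_cte c) a b = c * (b - a)).
  rewrite (Rint_eq _ a b (RiemannInt_P14 a b c)). apply RiemannInt_P15.
Qed.

Lemma Rint_scal f c a b : contR f -> Rint (fun x => c * f x) a b = c * Rint f a b.
Proof.
  intros Hf. assert (E := Rint_lin (fun _ => 0) f c a b (contR_const 0) Hf).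
  rewrite Rint_const in E. replace (fun x => c * f x) with (fun x => 0 + c * f x).
  rewrite E; ring. apply functional_extensionality; intros; ring.
Qed.

Lemma Rint_ext f g a b : a <= b -> contR f -> contR g -> (forall x, a <= x <= b -> f x = g x) ->
  Rint f a b = Rint g a b.
Proof.
  intros Hab Hf Hg E. rewrite (Rint_eq f a b (contR_int f a b Hf)), (Rint_eq g a b (contR_int g a b Hg)).
  apply RiemannInt_P18; auto. intros; apply E; lra.
Qed.

Lemma Rint_le f g a b : a <= b -> contR f -> contR g -> (forall x, a <= x <= b -> f x <= g x) ->
  Rint f a b <= Rint g a b.
Proof.
  intros Hab Hf Hg E. rewrite (Rint_eq f a b (contR_int f a b Hf)), (Rint_eq g a b (contR_int g a b Hg)).
  apply RiemannInt_P19; auto. intros; apply E; lra.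
Qed.

Lemma Rint_swap f a b : contR f -> Rint f a b = - Rint f b a.
Proof.
  intros Hf. rewrite (Rint_eq f a b (contR_int f a b Hf)), (Rint_eq f b a (contR_int f b a Hf)).
  apply RiemannInt_P8.
Qed.

Lemma Rint_bound f a b B : a <= b -> contR f -> (forall x, a <= x <= b -> Rabs (f x) <= B) ->
  Rabs (Rint f a b) <= B * (b - a).
Proof.
  intros Hab Hf H. apply Rabs_le. split.
  - rewrite <- Rint_const. replace (- Rint (fun _ => B) a b) with (Rint (fun _ => -B) a b).
    + apply Rint_le; auto using contR_const. intros x Hx; specialize (H x Hx); apply Rabs_le_inv in H; lra.
    + rewrite !Rint_const; ring.
  - rewrite <- Rint_const. apply Rint_le; auto using contR_const.
    intros x Hx; specialize (H x Hx); apply Rabs_le_inv in H; lra.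
Qed.

Lemma Rint_bound_gen f a b B : contR f ->
  (forall x, Rmin a b <= x <= Rmax a b -> Rabs (f x) <= B) ->
  Rabs (Rint f a b) <= B * Rabs (b - a).
Proof.
  intros Hf H. destruct (Rle_dec a b).
  - rewrite Rmin_left, Rmax_right in H by lra. rewrite (Rabs_pos_eq (b - a)) by lra. apply Rint_bound; auto.
  - rewrite Rmin_right, Rmax_left in H by lra. rewrite Rint_swap, Rabs_Ropp by auto.
    rewrite (Rabs_minus_sym b a), (Rabs_pos_eq (a - b)) by lra. apply Rint_bound; auto; lra.
Qed.

Lemma Rint_deriv f t : contR f -> derivable_pt_lim (fun s => Rint f 0 s) t (f t).
Proof.
  intros Hf eps Heps.
  destruct (Hf t (eps/2) ltac:(lra)) as [d [Hd Hdd]].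
  exists (mkposreal d Hd). intros h Hh0 Hh. simpl in Hh.
  rewrite <- (Rint_chasles f 0 t (t+h)) by auto.
  replace (Rint f 0 t + Rint f t (t + h) - Rint f 0 t) with (Rint f t (t+h)) by ring.
  assert (E : Rint f t (t+h) = Rint (fun x => f x - f t) t (t+h) + f t * h).
  { rewrite Rint_minus, Rint_const; auto using contR_const. ring. }
  rewrite E. replace ((Rint (fun x : R => f x - f t) t (t + h) + f t * h) / h - f t)
    with (Rint (fun x : R => f x - f t) t (t + h) / h) by (field; auto).
  unfold Rdiv. rewrite Rabs_mult, Rabs_inv.
  assert (B : Rabs (Rint (fun x : R => f x - f t) t (t + h)) <= eps/2 * Rabs (t + h - t)).
  { apply Rint_bound_gen. apply contR_minus; auto using contR_const.
    intros x Hx. destruct (Req_dec x t) as [->|Hne].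
    - rewrite Rminus_diag, Rabs_R0; lra.
    - left. apply Hdd. split; [split; [exact I| auto] |].
      simpl; unfold Rdist.
      unfold Rmin, Rmax in Hx; destruct (Rle_dec t (t+h));
      apply Rabs_def1; apply Rabs_def2 in Hh; lra. }
  replace (t + h - t) with h in B by ring.
  apply Rle_lt_trans with (eps/2 * Rabs h * / Rabs h).
  - apply Rmult_le_compat_r; auto. left; apply Rinv_0_lt_compat, Rabs_pos_lt; auto.
  - field_simplify; [lra|]. apply Rabs_no_R0; auto.
Qed.

Lemma zero_deriv_const G a b : a <= b -> (forall x, a <= x <= b -> derivable_pt_lim G x 0) ->
  G b = G a.
Proof.
  intros Hab H. destruct (Req_dec a b) as [->|Hne]; auto.
  destruct (MVT_cor2 G (fun _ => 0) a b ltac:(lra) H) as [c [Hc _]]. lra.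
Qed.

Lemma FTC f F a b : a <= b -> contR f -> (forall x, a <= x <= b -> derivable_pt_lim F x (f x)) ->
  Rint f a b = F b - F a.
Proof.
  intros Hab Hf HF.
  assert (E := zero_deriv_const (fun s => F s - Rint f 0 s) a b Hab).
  cbv beta in E. rewrite <- (Rint_chasles f 0 a b) in E by auto.
  assert (F b - (Rint f 0 a + Rint f a b) = F a - Rint f 0 a).
  { apply E. intros x Hx.
    assert (H0 := dpl_minus F (fun s => Rint f 0 s) x (f x) (f x) (HF x Hx) (Rint_deriv f x Hf)).
    rewrite Rminus_diag in H0. exact H0. }
  lra.
Qed.

Lemma gauge_unif (Q : R -> R -> Prop) :
  (forall y s s', Q y s -> 0 < s' <= s -> Q y s') ->
  (forall x, 0 <= x <= 1 -> exists d, 0 < d /\ forall y, Rabs (y - x) < d -> Q y d) ->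
  exists s, 0 < s /\ forall y, 0 <= y <= 1 -> Q y s.
Proof.
  intros Hmono Hg.
  set (E := fun b => 0 <= b <= 1 /\ exists s, 0 < s /\ forall y, 0 <= y <= b -> Q y s).
  assert (HE0 : E 0).
  { destruct (Hg 0 ltac:(lra)) as [d [Hd Hdd]]. split; [lra|]. exists d; split; auto.
    intros y Hy. apply Hdd. replace (y - 0) with 0 by lra. rewrite Rabs_R0; auto. }
  assert (Hb : bound E). { exists 1. intros x [Hx _]; lra. }
  destruct (completeness E Hb (ex_intro _ 0 HE0)) as [c [Hc1 Hc2]].
  assert (c0 : 0 <= c) by (apply Hc1; auto).
  assert (c1 : c <= 1) by (apply Hc2; intros x [Hx _]; lra).
  destruct (Hg c ltac:(lra)) as [d [Hd Hdd]].
  assert (exists b, E b /\ c - d < b).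
  { apply NNPP; intro N. assert (c <= c - d); [|lra].
    apply Hc2. intros x Hx. apply Rnot_lt_le. intro. apply N. exists x; auto. }
  destruct H as [b [[Hb01 [sb [Hsb Hsbb]]] Hbc]].
  set (c' := Rmin 1 (c + d/2)).
  assert (Ec' : E c').
  { split. unfold c'; unfold Rmin; destruct (Rle_dec 1 (c + d/2)); lra.
    exists (Rmin sb d). split. apply Rmin_glb_lt; auto.
    intros y Hy. destruct (Rle_dec y b).
    - apply Hmono with sb. apply Hsbb; lra. split. apply Rmin_glb_lt; auto. apply Rmin_l.
    - apply Hmono with d. apply Hdd. apply Rabs_def1; unfold c', Rmin in Hy;
      destruct (Rle_dec 1 (c + d/2)); lra. split. apply Rmin_glb_lt; auto. apply Rmin_r. }
  assert (c' <= c) by (apply Hc1; auto).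
  assert (c' = 1) by (unfold c', Rmin in *; destruct (Rle_dec 1 (c + d / 2)); lra).
  destruct Ec' as [_ [s [Hs Hss]]]. exists s; split; auto. intros y Hy. apply Hss. lra.
Qed.

Lemma per_Z (f : R -> R) : (forall x, f (x + 1) = f x) -> forall x k, f (x + IZR k) = f x.
Proof.
  intros H x k.
  assert (Hn : forall n x, f (x + INR n) = f x).
  { induction n; intros y. simpl. rewrite Rplus_0_r; auto.
    rewrite S_INR. replace (y + (INR n + 1)) with ((y + INR n) + 1) by ring. rewrite H; auto. }
  destruct k as [|p|p].
  - simpl; rewrite Rplus_0_r; auto.
  - rewrite <- positive_nat_Z, <- INR_IZR_INZ. apply Hn.
  - rewrite <- Pos2Z.opp_pos, opp_IZR, <- positive_nat_Z, <- INR_IZR_INZ.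
    rewrite <- (Hn (Pos.to_nat p) (x + - INR (Pos.to_nat p))). f_equal; ring.
Qed.

Lemma frac_ex x : exists k : Z, 0 <= x - IZR k < 1.
Proof. exists (Int_part x). destruct (base_Int_part x); lra. Qed.

Lemma phi_unif2 (phi : R -> R -> R) : cont_T2 phi ->
  forall eps, 0 < eps -> exists rho, 0 < rho /\
    forall x x' y, Rabs (x' - x) < rho -> Rabs (phi x' y - phi x y) < 2 * eps.
Proof.
  intros [Hper Hc] eps Heps.
  assert (Px : forall x y k, phi (x + IZR k) y = phi x y).
  { intros x y k. apply (per_Z (fun t => phi t y)). intros; apply Hper. }
  assert (Py : forall x y k, phi x (y + IZR k) = phi x y).
  { intros x y k. apply (per_Z (fun t => phi x t)). intros; apply Hper. }
  assert (SB : forall x0, exists s, 0 < s /\ forall y x', 0 <= y <= 1 -> Rabs (x' - x0) < s ->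
     Rabs (phi x' y - phi x0 y) < eps).
  { intros x0.
    destruct (gauge_unif (fun y s => forall x', Rabs (x' - x0) < s -> Rabs (phi x' y - phi x0 y) < eps))
      as [s [Hs Hss]].
    - intros y s s' H1 H2 x' Hx'. apply H1; lra.
    - intros y0 _. destruct (Hc x0 y0 (eps/2) ltac:(lra)) as [d [Hd Hdd]].
      exists d; split; auto. intros y Hy x' Hx'.
      assert (A1 := Hdd x' y Hx' Hy).
      assert (A2 := Hdd x0 y ltac:(rewrite Rminus_diag, Rabs_R0; auto) Hy).
      replace (phi x' y - phi x0 y) with ((phi x' y - phi x0 y0) - (phi x0 y - phi x0 y0)) by ring.
      eapply Rle_lt_trans; [apply Rabs_triang|]. rewrite Rabs_Ropp. lra.
    - exists s; split; [auto| intros; apply Hss; auto]. }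
  destruct (gauge_unif (fun x s => forall x' y, 0 <= y <= 1 -> Rabs (x' - x) < s ->
              Rabs (phi x' y - phi x y) < 2 * eps)) as [s [Hs Hss]].
  - intros y s s' H1 H2 x' z Hz Hx'. apply H1; auto; lra.
  - intros x0 _. destruct (SB x0) as [s [Hs Hss]]. exists (s/2); split; [lra|].
    intros x Hx x' y Hy Hx'.
    assert (A1 := Hss y x' Hy ltac:(apply Rabs_lt_inv in Hx; apply Rabs_lt_inv in Hx'; apply Rabs_def1; lra)).
    assert (A2 := Hss y x Hy ltac:(apply Rabs_lt_inv in Hx; apply Rabs_def1; lra)).
    replace (phi x' y - phi x y) with ((phi x' y - phi x0 y) - (phi x y - phi x0 y)) by ring.
    eapply Rle_lt_trans; [apply Rabs_triang|]. rewrite Rabs_Ropp. lra.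
  -
    exists s; split; auto. intros x x' y Hxx'.
    destruct (frac_ex x) as [k Hk]. destruct (frac_ex y) as [l Hl].
    specialize (Hss (x - IZR k) ltac:(lra) (x' - IZR k) (y - IZR l) ltac:(lra)
      ltac:(replace (x' - IZR k - (x - IZR k)) with (x' - x) by ring; auto)).
    rewrite <- (Px (x - IZR k) (y - IZR l) k), <- (Px (x' - IZR k) (y - IZR l) k) in Hss.
    replace (x - IZR k + IZR k) with x in Hss by ring. replace (x' - IZR k + IZR k) with x' in Hss by ring.
    rewrite <- (Py x (y - IZR l) l), <- (Py x' (y - IZR l) l) in Hss.
    replace (y - IZR l + IZR l) with y in Hss by ring. auto.
Qed.

Lemma phi_unif (phi : R -> R -> R) : cont_T2 phi ->
  forall eps, 0 < eps -> exists rho, 0 < rho /\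
    forall x x' y, Rabs (x' - x) < rho -> Rabs (phi x' y - phi x y) < eps.
Proof.
  intros H eps He. destruct (phi_unif2 phi H (eps/2) ltac:(lra)) as [r [Hr Hrr]].
  exists r; split; auto. intros. replace eps with (2 * (eps/2)) by field. auto.
Qed.

Definition ps_at (f : R -> R) x0 r (a : nat -> R) :=
  forall x, Rabs (x - x0) < r -> Pser a (x - x0) (f x).

Definition Sum (u : nat -> R) : R := epsilon (inhabits 0) (fun l => infinite_sum u l).

Lemma Sum_ok u l : infinite_sum u l -> Sum u = l.
Proof.
  intros H. unfold Sum. apply (is_unique u). apply (epsilon_spec (inhabits 0) (fun l => infinite_sum u l)).
  eauto. auto.
Qed.

Lemma Sum_spec u : (exists l, infinite_sum u l) -> infinite_sum u (Sum u).
Proof. intros [l H]. rewrite (Sum_ok u l H); auto. Qed.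

Definition D (f : R -> R) (x : R) : R := epsilon (inhabits 0) (fun l => derivable_pt_lim f x l).

Lemma D_ok f x l : derivable_pt_lim f x l -> D f x = l.
Proof.
  intros H. unfold D. apply (dpl_unique f x). apply (epsilon_spec (inhabits 0) (fun l => derivable_pt_lim f x l)).
  eauto. auto.
Qed.

Lemma term_to_0 u l : infinite_sum u l -> forall e, 0 < e -> exists N, forall n, (n >= N)%nat -> Rabs (u n) < e.
Proof.
  intros H e He. destruct (H (e/2) ltac:(lra)) as [N HN]. exists (S N). intros n Hn.
  destruct n; [lia|]. assert (A1 := HN (S n) ltac:(lia)). assert (A2 := HN n ltac:(lia)).
  unfold Rdist in *. simpl in A1. replace (u (S n)) with ((sum_f_R0 u n + u (S n) - l) - (sum_f_R0 u n - l)) by ring.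
  eapply Rle_lt_trans; [apply Rabs_triang|]. rewrite Rabs_Ropp. lra.
Qed.

Lemma fin_bound (u : nat -> R) N : exists B, 0 <= B /\ forall n, (n <= N)%nat -> Rabs (u n) <= B.
Proof.
  induction N.
  - exists (Rabs (u 0%nat)). split; [apply Rabs_pos|]. intros n Hn. replace n with 0%nat by lia. lra.
  - destruct IHN as [B [HB HBB]]. exists (Rmax B (Rabs (u (S N)))). split.
    apply Rle_trans with B; auto; apply Rmax_l.
    intros n Hn. destruct (Nat.eq_dec n (S N)) as [->|Hne]. apply Rmax_r.
    apply Rle_trans with B. apply HBB; lia. apply Rmax_l.
Qed.

Lemma is_bounded u l : infinite_sum u l -> exists B, 0 <= B /\ forall n, Rabs (u n) <= B.
Proof.
  intros H. destruct (term_to_0 u l H 1 ltac:(lra)) as [N HN].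
  destruct (fin_bound u N) as [B [HB HBB]]. exists (Rmax B 1). split.
  apply Rle_trans with B; auto; apply Rmax_l.
  intros n. destruct (le_lt_dec n N). apply Rle_trans with B; auto; apply Rmax_l.
  apply Rle_trans with 1; [left; apply HN; lia| apply Rmax_r].
Qed.

Definition cb (a : nat -> R) (B s : R) := forall n, Rabs (a n) * s ^ n <= B.

Lemma ps_cb f x0 r a s : ps_at f x0 r a -> 0 <= s < r -> exists B, 0 <= B /\ cb a B s.
Proof.
  intros H Hs. assert (Hp := H (x0 + s) ltac:(replace (x0 + s - x0) with s by ring; rewrite Rabs_pos_eq; lra)).
  unfold Pser in Hp. destruct (is_bounded _ _ Hp) as [B [HB HBB]]. exists B; split; auto.
  intros n. specialize (HBB n). rewrite Rabs_mult, <- RPow_abs in HBB.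
  replace (x0 + s - x0) with s in HBB by ring. rewrite (Rabs_pos_eq s) in HBB by lra. auto.
Qed.

Lemma cb_geom a B s rho n : cb a B s -> 0 <= rho -> 0 < s ->
  Rabs (a n) * rho ^ n <= B * (rho / s) ^ n.
Proof.
  intros H Hr Hs. unfold Rdiv. rewrite Rpow_mult_distr, pow_inv.
  specialize (H n). assert (0 < s ^ n) by (apply pow_lt; auto).
  apply Rmult_le_reg_r with (s ^ n); auto.
  replace (B * (rho ^ n * / s ^ n) * s ^ n) with (B * rho ^ n) by (field; lra).
  replace (Rabs (a n) * rho ^ n * s ^ n) with ((Rabs (a n) * s ^ n) * rho ^ n) by ring.
  apply Rmult_le_compat_r; auto. apply pow_le; auto.
Qed.

Lemma cb_abs_conv a B s rho : cb a B s -> 0 <= rho < s ->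
  exists A, infinite_sum (fun n => Rabs (a n) * rho ^ n) A.
Proof.
  intros H Hr.
  destruct (is_comp (fun n => Rabs (a n) * rho ^ n) (fun n => B * (rho / s) ^ n) (B / (1 - rho / s)))
    as [A [HA _]].
  - intros n. rewrite Rabs_pos_eq. apply cb_geom; auto; lra.
    apply Rmult_le_pos; [apply Rabs_pos|apply pow_le; lra].
  - apply is_geom. split. apply div_nonneg; lra. apply div_lt1; lra.
  - eauto.
Qed.

Lemma n_geom (th : R) m : 0 <= th < 1 -> INR (S m) * th ^ m <= / (1 - th).
Proof.
  intros Hth. apply Rle_trans with (sum_f_R0 (fun k => th ^ k) m).
  - clear -Hth. induction m.
    + simpl; lra.
    + rewrite S_INR. simpl sum_f_R0. 
      assert (th ^ S m <= th ^ m) by (apply pow_mono_dec; lra || lia).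
      assert (INR (S m) * th ^ S m <= INR (S m) * th ^ m)
        by (apply Rmult_le_compat_l; [apply pos_INR|auto]).
      change (th ^ S m) with (th * th ^ m) in *. lra.
  - rewrite sum_geom by lra. unfold Rdiv. rewrite Rmult_comm. rewrite <- (Rmult_1_r (/ (1 - th))) at 2.
    apply Rmult_le_compat_l. left; apply Rinv_0_lt_compat; lra.
    assert (0 <= th ^ S m) by (apply pow_le; lra). lra.
Qed.

Lemma dpl_powc x0 n y : derivable_pt_lim (fun t => (t - x0) ^ n) y (INR n * (y - x0) ^ pred n).
Proof.
  replace (INR n * (y - x0) ^ pred n) with ((INR n * (y - x0) ^ pred n) * (1 - 0)) by ring.
  apply (dpl_comp (fun t => t - x0) (fun t => t ^ n)).
  - apply dpl_minus; [apply dpl_id|apply dpl_const].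
  - apply derivable_pt_lim_pow.
Qed.

Lemma deriv_coef_maj a B rho rho1 rho2 : cb a B rho2 -> 0 <= rho < rho1 -> rho1 < rho2 ->
  forall m, Rabs (INR (S m) * a (S m)) * rho ^ m <=
     (/ (1 - rho/rho1)) * (B / rho1) * (rho1 / rho2) ^ S m.
Proof.
  intros Hcb Hr Hr12 m.
  assert (Hth : 0 <= rho / rho1 < 1) by (split; [apply div_nonneg|apply div_lt1]; lra).
  assert (Hn := n_geom (rho/rho1) m Hth).
  assert (Hc := cb_geom a B rho2 rho1 (S m) Hcb ltac:(lra) ltac:(lra)).
  rewrite Rabs_mult, (Rabs_pos_eq (INR (S m))) by apply pos_INR.
  replace (INR (S m) * Rabs (a (S m)) * rho ^ m) with
    ((INR (S m) * (rho/rho1) ^ m) * (Rabs (a (S m)) * rho1 ^ S m / rho1)).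
  2:{ unfold Rdiv. rewrite Rpow_mult_distr, pow_inv. simpl. field. split; [lra|].
      apply pow_nonzero; lra. }
  replace (/ (1 - rho / rho1) * (B / rho1) * (rho1 / rho2) ^ S m) with
    (/ (1 - rho / rho1) * (B * (rho1 / rho2) ^ S m / rho1)) by (unfold Rdiv; ring).
  apply Rmult_le_compat; auto.
  - apply Rmult_le_pos; [apply pos_INR|apply pow_le; lra].
  - apply div_nonneg; [|lra]. apply Rmult_le_pos; [apply Rabs_pos|apply pow_le; lra].
  - unfold Rdiv at 1 3. apply Rmult_le_compat_r; [left; apply Rinv_0_lt_compat; lra| auto].
Qed.

Lemma ps_deriv f x0 r a : ps_at f x0 r a -> forall x, Rabs (x - x0) < r ->
  infinite_sum (fun n => INR (S n) * a (S n) * (x - x0) ^ n)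
               (Sum (fun n => INR (S n) * a (S n) * (x - x0) ^ n)) /\
  derivable_pt_lim f x (Sum (fun n => INR (S n) * a (S n) * (x - x0) ^ n)).
Proof.
  intros Hps x Hx.
  set (rho := (Rabs (x - x0) + r) / 2). set (rho1 := (rho + r)/2). set (rho2 := (rho1 + r)/2).
  assert (Hr0 : 0 <= Rabs (x - x0)) by apply Rabs_pos.
  assert (R1 : 0 <= rho < rho1) by (unfold rho1, rho; lra).
  assert (R2 : rho1 < rho2) by (unfold rho2, rho1, rho; lra).
  assert (R3 : rho2 < r) by (unfold rho2, rho1, rho; lra).
  assert (R4 : Rabs (x - x0) < rho) by (unfold rho; lra).
  destruct (ps_cb f x0 r a rho2 Hps ltac:(lra)) as [B [HB Hcb]].
  set (K := (/ (1 - rho/rho1)) * (B / rho1)). set (th := rho1 / rho2).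
  assert (Hth : 0 <= th < 1) by (unfold th; split; [apply div_nonneg|apply div_lt1]; lra).
  set (v := fun m => K * th ^ S m).
  assert (Hv : infinite_sum v (K * th / (1 - th))).
  { apply is_ext with (fun m => (K * th) * th ^ m). intros; unfold v; simpl; ring. apply is_geom; auto. }
  set (b := fun n => INR (S n) * a (S n)).
  assert (Hmaj : forall m y, Rabs (y - x0) <= rho -> Rabs (b m * (y - x0) ^ m) <= v m).
  { intros m y Hy. unfold v, K, th, b. rewrite Rabs_mult, <- RPow_abs.
    eapply Rle_trans; [|apply deriv_coef_maj with (rho := rho); [exact Hcb|exact R1|exact R2]].
    apply Rmult_le_compat_l; [apply Rabs_pos|]. apply pow_incr; split; auto; apply Rabs_pos. }
  assert (Hconv : forall y, Rabs (y - x0) <= rho -> infinite_sum (fun n => b n * (y - x0) ^ n) (Sum (fun n => b n * (y - x0) ^ n))).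
  { intros y Hy. apply Sum_spec. eapply is_exists_abs; [|apply Hv]. intros; apply Hmaj; auto. }
  assert (Hrho : 0 < rho) by (unfold rho; lra).
  set (fn := fun N y => sum_f_R0 (fun n => a n * (y - x0) ^ n) (S N)).
  set (fn' := fun N y => sum_f_R0 (fun n => b n * (y - x0) ^ n) N).
  set (g' := fun y => Sum (fun n => b n * (y - x0) ^ n)).
  assert (Hcvu : CVU fn' g' x0 (mkposreal rho Hrho)).
  { intros e He.
    destruct (Hv e He) as [N HN]. exists N. intros n y Hn Hy. unfold Boule in Hy; simpl in Hy.
    unfold fn', g'. eapply Rle_lt_trans.
    apply (is_tail_bound (fun k => b k * (y - x0) ^ k) v _ (K * th / (1 - th)) n); auto.
    intros; apply Hmaj; lra. apply Hconv; lra.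
    specialize (HN n Hn). unfold Rdist in HN. apply Rabs_lt_inv in HN. lra. }
  assert (Hd := CVU_derivable fn fn' f g' x0 (mkposreal rho Hrho) Hcvu).
  split. apply Hconv; unfold rho; lra.
  apply Hd.
  - intros y Hy. unfold Boule in Hy; simpl in Hy. assert (Hp := Hps y ltac:(unfold rho in Hy; lra)).
    intros e He. destruct (Hp e He) as [N HN]. exists N. intros n Hn. unfold fn. apply HN; lia.
  - intros N y _. unfold fn, fn'. induction N.
    + assert (H1 : derivable_pt_lim (fun t => a 0%nat * (t - x0)^0 + a 1%nat * (t - x0)^1) y
          (a 0%nat * (INR 0 * (y-x0)^pred 0) + a 1%nat * (INR 1 * (y - x0)^pred 1)))
        by (apply dpl_plus; apply dpl_scal; apply dpl_powc).
      replace (sum_f_R0 (fun n : nat => b n * (y - x0) ^ n) 0) with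
        (a 0%nat * (INR 0 * (y-x0)^pred 0) + a 1%nat * (INR 1 * (y - x0)^pred 1))
        by (unfold b; simpl; ring).
      apply dpl_ext with (2 := H1). intros; reflexivity.
    + change (sum_f_R0 (fun n : nat => a n * (y - x0) ^ n) (S (S N))) with
        (sum_f_R0 (fun n : nat => a n * (y - x0) ^ n) (S N) + a (S (S N)) * (y - x0) ^ (S (S N))).
      apply dpl_ext with (fun t => sum_f_R0 (fun n : nat => a n * (t - x0) ^ n) (S N) + a (S (S N)) * (t - x0) ^ (S (S N))).
      intros; reflexivity.
      change (sum_f_R0 (fun n : nat => b n * (y - x0) ^ n) (S N)) with
        (sum_f_R0 (fun n : nat => b n * (y - x0) ^ n) N + b (S N) * (y - x0) ^ (S N)).
      apply dpl_plus. apply IHN.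
      replace (b (S N) * (y - x0) ^ S N) with (a (S (S N)) * (INR (S (S N)) * (y - x0) ^ pred (S (S N)))).
      apply dpl_scal. apply dpl_powc. unfold b; simpl pred; ring.
  - unfold Boule; simpl. unfold rho; lra.
Qed.

Lemma ps_at_D f x0 r a : ps_at f x0 r a -> ps_at (D f) x0 r (fun n => INR (S n) * a (S n)).
Proof.
  intros H x Hx. destruct (ps_deriv f x0 r a H x Hx) as [H1 H2]. rewrite (D_ok f x _ H2).
  unfold Pser. apply is_ext with (2 := H1). intros; ring.
Qed.

Lemma ps_at_deriv f x0 r a : ps_at f x0 r a -> forall x, Rabs (x - x0) < r -> derivable_pt_lim f x (D f x).
Proof.
  intros H x Hx. destruct (ps_deriv f x0 r a H x Hx) as [H1 H2]. rewrite (D_ok f x _ H2). auto.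
Qed.

Lemma ra_deriv f : real_analytic f -> forall x, derivable_pt_lim f x (D f x).
Proof.
  intros H x. destruct (H x) as [r [Hr [a Ha]]]. apply (ps_at_deriv f x r a Ha).
  rewrite Rminus_diag, Rabs_R0; auto.
Qed.

Lemma ra_D f : real_analytic f -> real_analytic (D f).
Proof.
  intros H x0. destruct (H x0) as [r [Hr [a Ha]]]. exists r; split; auto.
  exists (fun n => INR (S n) * a (S n)). apply (ps_at_D f x0 r a Ha).
Qed.

Lemma ra_cont f : real_analytic f -> contR f.
Proof. intros H x. apply dpl_cont with (D f x). apply ra_deriv; auto. Qed.

Lemma ra_shift f c : real_analytic f -> real_analytic (fun x => f (x + c)).
Proof.
  intros H x0. destruct (H (x0 + c)) as [r [Hr [a Ha]]]. exists r; split; auto. exists a.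
  intros x Hx. replace (x - x0) with (x + c - (x0 + c)) by ring. apply Ha.
  replace (x + c - (x0 + c)) with (x - x0) by ring; auto.
Qed.

Lemma ra_lin f g c : real_analytic f -> real_analytic g -> real_analytic (fun x => f x + c * g x).
Proof.
  intros Hf Hg x0. destruct (Hf x0) as [r [Hr [a Ha]]]. destruct (Hg x0) as [r' [Hr' [a' Ha']]].
  exists (Rmin r r'). split. apply Rmin_glb_lt; auto.
  exists (fun n => a n + c * a' n). intros x Hx.
  assert (H1 := Ha x ltac:(eapply Rlt_le_trans; [apply Hx| apply Rmin_l])).
  assert (H2 := Ha' x ltac:(eapply Rlt_le_trans; [apply Hx| apply Rmin_r])).
  unfold Pser in *. apply is_ext with (fun n => a n * (x - x0) ^ n + c * (a' n * (x - x0) ^ n)).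
  intros; ring. apply is_plus; auto. apply is_scal; auto.
Qed.

Lemma interchange (b : nat -> nat -> R) (row col : nat -> R) S u U e :
  (forall j, infinite_sum (b j) (row j)) ->
  infinite_sum row S ->
  (forall k, infinite_sum (fun j => b j k) (col k)) ->
  (forall j, 0 <= u j) -> infinite_sum u U ->
  Un_cv e 0 ->
  (forall j K, Rabs (row j - sum_f_R0 (b j) K) <= u j * e K) ->
  infinite_sum col S.
Proof.
  intros Hrow HS Hcol Hu HU He Hb.
  assert (fin : forall K, infinite_sum (fun j => sum_f_R0 (b j) K) (sum_f_R0 col K)).
  { induction K. simpl. apply Hcol. simpl. apply is_plus; auto. }
  assert (HU0 : 0 <= U) by (apply is_nonneg with u; auto).
  assert (bd : forall K, Rabs (S - sum_f_R0 col K) <= U * e K).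
  { intros K. assert (Hd := is_minus _ _ _ _ HS (fin K)).
    destruct (is_comp (fun j => row j - sum_f_R0 (b j) K) (fun j => e K * u j) (e K * U))
      as [l [Hl1 Hl2]]; auto.
    intros j; rewrite Rmult_comm; auto. apply is_scal; auto.
    rewrite (is_unique _ _ _ Hd Hl1). lra. }
  intros eps Heps. destruct (He (eps / (U + 1))) as [N HN].
  { apply Rdiv_lt_0_compat; lra. }
  exists N. intros n Hn. unfold Rdist. rewrite Rabs_minus_sym.
  eapply Rle_lt_trans; [apply bd|]. specialize (HN n Hn). unfold Rdist in HN.
  rewrite Rminus_0_r in HN. apply Rabs_lt_inv in HN.
  destruct (Req_dec U 0) as [->|HU1]. lra.
  apply Rle_lt_trans with (U * (eps / (U + 1))).
  apply Rmult_le_compat_l; lra.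
  replace (U * (eps / (U + 1))) with (eps * (U / (U + 1))) by (field; lra).
  rewrite <- (Rmult_1_r eps) at 2. apply Rmult_lt_compat_l; auto. apply div_lt1; lra.
Qed.

Lemma C_nonneg n k : 0 <= C n k.
Proof.
  unfold C. apply div_nonneg. left; apply INR_fact_lt_0.
  apply Rmult_lt_0_compat; apply INR_fact_lt_0.
Qed.

Lemma binom_term_le x y n k : 0 <= x -> 0 <= y -> (k <= n)%nat ->
  C n k * x ^ k * y ^ (n - k) <= (x + y) ^ n.
Proof.
  intros Hx Hy Hk. rewrite binomial.
  apply (sum_ge_term (fun i => C n i * x ^ i * y ^ (n - i))); auto.
  intros i. apply Rmult_le_pos; [apply Rmult_le_pos; [apply C_nonneg|apply pow_le; auto]|apply pow_le; auto].
Qed.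

Lemma sum_zero N : sum_f_R0 (fun _ => 0) N = 0.
Proof. induction N; simpl; auto; rewrite IHN; ring. Qed.

Lemma sum_all0 u N : (forall i, (i <= N)%nat -> u i = 0) -> sum_f_R0 u N = 0.
Proof. intros H. rewrite <- (sum_zero N). apply sum_eq. auto. Qed.

Lemma sum_diff u K N : (K <= N)%nat ->
  sum_f_R0 u N - sum_f_R0 u K = sum_f_R0 (fun k => if Nat.ltb K k then u k else 0) N.
Proof.
  intros H. induction H.
  - rewrite Rminus_diag. symmetry. apply sum_all0. intros i Hi.
    destruct (Nat.ltb_spec K i); auto; lia.
  - simpl. destruct (Nat.ltb_spec K (S m)); [|lia]. rewrite <- IHle. ring.
Qed.

Lemma is_finite u n : (forall k, (n < k)%nat -> u k = 0) -> infinite_sum u (sum_f_R0 u n).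
Proof.
  intros H e He. exists n. intros m Hm. unfold Rdist.
  replace (sum_f_R0 u m - sum_f_R0 u n) with 0. rewrite Rabs_R0; auto.
  rewrite sum_diff by lia. symmetry. apply sum_all0. intros i Hi.
  destruct (Nat.ltb_spec n i); auto.
Qed.

Lemma is_lead_zeros u l k : (forall n, (n < k)%nat -> u n = 0) ->
  infinite_sum (fun m => u (m + k)%nat) l -> infinite_sum u l.
Proof.
  revert u l. induction k; intros u l Hz H.
  - apply is_ext with (2 := H). intros; rewrite Nat.add_0_r; auto.
  - assert (E : u 0%nat = 0) by (apply Hz; lia).
    replace l with (u 0%nat + l) by (rewrite E; ring).
    apply is_unshift. apply (IHk (fun n => u (S n))).
    + intros n Hn; apply Hz; lia.
    + apply is_ext with (2 := H). intros m. f_equal. lia.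
Qed.

Lemma sum_scal_l c g n : sum_f_R0 (fun k => c * g k) n = c * sum_f_R0 g n.
Proof. induction n; simpl; [ring|]. rewrite IHn; ring. Qed.

Lemma is_shift_k u U k : infinite_sum u U -> exists Uk, infinite_sum (fun m => u (m + k)%nat) Uk /\
  ((forall n, 0 <= u n) -> Uk <= U).
Proof.
  intros H. induction k.
  - exists U. split; [apply is_ext with (2 := H); intros; rewrite Nat.add_0_r; auto|lra].
  - destruct IHk as [Uk [H1 H2]]. exists (Uk - u k). split.
    + apply is_ext with (2 := is_shift _ _ H1). intros m; simpl. f_equal; lia.
    + intros Hp. specialize (H2 Hp). specialize (Hp k). lra.
Qed.

Lemma pow_to_0 q : 0 <= q < 1 -> Un_cv (fun K => q ^ S K) 0.
Proof.
  intros Hq e He. destruct (pow_lt_1_zero q ltac:(rewrite Rabs_pos_eq; lra) e He) as [N HN].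
  exists N. intros n Hn. unfold Rdist. rewrite Rminus_0_r. apply HN. lia.
Qed.

Lemma Rabs_pow_le x n : Rabs (x ^ n) = Rabs x ^ n.
Proof. symmetry; apply RPow_abs. Qed.

Lemma reexp f x0 r a Rr : ps_at f x0 r a -> 0 < Rr < r ->
  exists A, 0 <= A /\ forall y, Rabs (y - x0) < Rr/2 -> exists c, ps_at f y (Rr/2) c /\ cb c A (Rr/2).
Proof.
  intros Hps HR.
  destruct (ps_cb f x0 r a ((Rr+r)/2) Hps ltac:(lra)) as [B [HB Hcb]].
  destruct (cb_abs_conv a B ((Rr+r)/2) Rr Hcb ltac:(lra)) as [A HA].
  assert (Hnn : forall n, 0 <= Rabs (a n) * Rr ^ n).
  { intros; apply Rmult_le_pos; [apply Rabs_pos|apply pow_le; lra]. }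
  exists A. split. apply is_nonneg with (2 := HA); auto.
  intros y Hy. set (d := y - x0).
  assert (HR2 : 0 < Rr / 2) by lra.
  set (s := fun k m => a (m + k)%nat * C (m + k) k * d ^ m).
  assert (Hdom : forall k m, Rabs (s k m) <= Rabs (a (m + k)%nat) * Rr ^ (m + k) / (Rr/2) ^ k).
  { intros k m. unfold s. rewrite !Rabs_mult, Rabs_pow_le, (Rabs_pos_eq (C _ _)) by apply C_nonneg.
    assert (Hp : 0 < (Rr/2) ^ k) by (apply pow_lt; lra).
    apply Rmult_le_reg_r with ((Rr/2)^k); auto. unfold Rdiv. rewrite (Rmult_assoc _ (/ _)), Rinv_l by lra.
    rewrite Rmult_1_r, !Rmult_assoc. apply Rmult_le_compat_l; [apply Rabs_pos|].
    apply Rle_trans with ((Rr/2 + Rabs d) ^ (m + k)).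
    - assert (T := binom_term_le (Rr/2) (Rabs d) (m + k) k ltac:(lra) (Rabs_pos d) ltac:(lia)).
      replace (m + k - k)%nat with m in T by lia. lra.
    - apply pow_incr. split. assert (0 <= Rabs d) by apply Rabs_pos. lra. unfold d; lra. }
  assert (Hck : forall k, exists Uk, infinite_sum (s k) (Sum (s k)) /\ Rabs (Sum (s k)) * (Rr/2)^k <= Uk
            /\ Uk <= A).
  { intros k. destruct (is_shift_k _ _ k HA) as [Uk [HUk1 HUk2]].
    specialize (HUk2 Hnn).
    destruct (is_comp (s k) (fun m => Rabs (a (m + k)%nat) * Rr ^ (m + k) / (Rr/2) ^ k) (Uk / (Rr/2)^k))
      as [l [Hl1 Hl2]]; auto.
    - unfold Rdiv. apply is_ext with (fun m => / (Rr/2)^k * (Rabs (a (m + k)%nat) * Rr ^ (m + k))).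
      intros; rewrite Rmult_comm; reflexivity. rewrite Rmult_comm. apply is_scal; auto.
    - exists Uk. rewrite (Sum_ok _ _ Hl1). split; auto. split; auto.
      assert (Hp : 0 < (Rr/2) ^ k) by (apply pow_lt; lra).
      apply Rmult_le_reg_r with (/ (Rr/2)^k). apply Rinv_0_lt_compat; auto.
      rewrite Rmult_assoc, Rinv_r by lra. rewrite Rmult_1_r. auto. }
  set (c := fun k => Sum (s k)).
  exists c. split.
  2:{ intros k. destruct (Hck k) as [Uk [_ [H1 H2]]]. unfold c. lra. }
  intros x Hx. set (t := x - y).
  assert (Hxt : x - x0 = d + t) by (unfold d, t; ring).
  set (rho := (Rabs t + Rr/2)/2).
  assert (Ht0 : 0 <= Rabs t) by apply Rabs_pos.
  assert (Hd0 : 0 <= Rabs d) by apply Rabs_pos.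
  assert (Hrho1 : Rabs t < rho) by (unfold rho, t; lra).
  assert (Hrho2 : Rabs d + rho < Rr) by (unfold rho, t, d in *; lra).
  set (b := fun n k => if Nat.leb k n then a n * C n k * t ^ k * d ^ (n - k) else 0).
  set (row := fun n => a n * (x - x0) ^ n).
  assert (Hrowsum : forall n, sum_f_R0 (b n) n = row n).
  { intros n. unfold row. rewrite Hxt, Rplus_comm, binomial, scal_sum. apply sum_eq. intros i Hi.
    unfold b. destruct (Nat.leb_spec i n); [ring|lia]. }
  assert (Hbz : forall n k, (n < k)%nat -> b n k = 0).
  { intros n k H. unfold b. destruct (Nat.leb_spec k n); [lia|auto]. }
  destruct (cb_abs_conv a B ((Rr+r)/2) (Rabs d + rho) Hcb ltac:(lra)) as [U HU].
  apply (interchange b row (fun k => c k * t ^ k) (f x) (fun n => Rabs (a n) * (Rabs d + rho) ^ n) U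
           (fun K => (Rabs t / rho) ^ S K)).
  - intros n. rewrite <- Hrowsum. apply is_finite. intros; apply Hbz; auto.
  - apply Hps. rewrite Hxt. eapply Rle_lt_trans; [apply Rabs_triang|]. lra.
  - intros k. apply is_lead_zeros with k. intros n Hn; apply Hbz; auto.
    apply is_ext with (fun m => t ^ k * s k m).
    + intros m. unfold b, s. destruct (Nat.leb_spec k (m + k)); [|lia].
      replace (m + k - k)%nat with m by lia. ring.
    + rewrite Rmult_comm. apply is_scal. destruct (Hck k) as [_ [H _]]. apply H.
  - intros; apply Rmult_le_pos; [apply Rabs_pos|apply pow_le; lra].
  - auto.
  - apply pow_to_0. split. apply div_nonneg; lra. apply div_lt1; lra.
  - intros n K.
    assert (Hq : 0 <= Rabs t / rho <= 1) by (split; [apply div_nonneg|left; apply div_lt1]; lra).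
    assert (Hq0 : 0 <= (Rabs t / rho) ^ S K) by (apply pow_le; lra).
    destruct (le_lt_dec n K) as [HnK|HnK].
    + replace (sum_f_R0 (b n) K) with (sum_f_R0 (b n) n).
      rewrite Hrowsum, Rminus_diag, Rabs_R0. apply Rmult_le_pos; auto.
      apply Rmult_le_pos; [apply Rabs_pos|apply pow_le; lra].
      assert (E := sum_diff (b n) n K HnK).
      rewrite (sum_all0 (fun k => if Nat.ltb n k then b n k else 0) K) in E. lra.
      intros i Hi. destruct (Nat.ltb_spec n i); auto.
    + rewrite <- Hrowsum, sum_diff by lia.
      eapply Rle_trans; [apply Rsum_abs|].
      apply Rle_trans with (sum_f_R0 (fun k => (Rabs t / rho) ^ S K *
               (Rabs (a n) * (C n k * rho ^ k * Rabs d ^ (n - k)))) n).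
      * apply sum_Rle. intros k Hk. destruct (Nat.ltb_spec K k).
        -- unfold b. destruct (Nat.leb_spec k n); [|lia].
           rewrite !Rabs_mult, !Rabs_pow_le, (Rabs_pos_eq (C n k)) by apply C_nonneg.
           replace (Rabs t ^ k) with ((Rabs t / rho) ^ k * rho ^ k).
           2:{ unfold Rdiv. rewrite Rpow_mult_distr, pow_inv. field. apply pow_nonzero; lra. }
           assert ((Rabs t / rho) ^ k <= (Rabs t / rho) ^ S K) by (apply pow_mono_dec; auto).
           assert (0 <= C n k) by apply C_nonneg.
           assert (0 <= rho ^ k) by (apply pow_le; lra).
           assert (0 <= Rabs d ^ (n - k)) by (apply pow_le; lra).
           assert (0 <= Rabs (a n)) by apply Rabs_pos.
           assert (0 <= (Rabs t / rho) ^ k) by (apply pow_le; lra).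
           set (Q := (Rabs t / rho) ^ k) in *. set (Q' := (Rabs t / rho) ^ S K) in *.
           set (P := C n k * rho ^ k * Rabs d ^ (n - k)).
           assert (0 <= P) by (unfold P; apply Rmult_le_pos; [apply Rmult_le_pos|]; assumption).
           replace (Rabs (a n) * C n k * (Q * rho ^ k) * Rabs d ^ (n - k)) with (Q * (Rabs (a n) * P))
             by (unfold P; ring).
           apply Rmult_le_compat_r; auto. apply Rmult_le_pos; auto.
        -- rewrite Rabs_R0. apply Rmult_le_pos; auto. apply Rmult_le_pos; [apply Rabs_pos|].
           apply Rmult_le_pos; [apply Rmult_le_pos|]; [apply C_nonneg|apply pow_le; lra|apply pow_le; lra].
      * right. rewrite sum_scal_l, sum_scal_l, (Rplus_comm (Rabs d) rho), binomial. ring.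
Qed.

Definition UA f s Cc := forall y, exists c, ps_at f y s c /\ cb c Cc s.

Lemma ps_at_shrink f y s s' c : ps_at f y s c -> s' <= s -> ps_at f y s' c.
Proof. intros H Hs x Hx. apply H. lra. Qed.

Lemma ua_periodic f : real_analytic f -> (forall x, f (x + 1) = f x) ->
  exists s Cc, 0 < s /\ 0 <= Cc /\ UA f s Cc.
Proof.
  intros Hf Hper.
  destruct (gauge_unif (fun y s => exists c, ps_at f y s c /\ cb c (/ s) s)) as [s [Hs Hss]].
  - intros y s s' [c [H1 H2]] Hs'. exists c. split. apply ps_at_shrink with s; auto; lra.
    intros n. specialize (H2 n). apply Rle_trans with (Rabs (c n) * s ^ n).
    apply Rmult_le_compat_l; [apply Rabs_pos|apply pow_incr; lra].
    apply Rle_trans with (/ s); auto. apply Rinv_le_contravar; lra.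
  - intros x _. destruct (Hf x) as [r [Hr [a Ha]]].
    destruct (reexp f x r a (r/2) Ha ltac:(lra)) as [A [HA HAA]].
    exists (Rmin (r/2/2) (/ (A + 1))). split. apply Rmin_glb_lt; [lra|apply Rinv_0_lt_compat; lra].
    intros y Hy. destruct (HAA y ltac:(eapply Rlt_le_trans; [apply Hy|apply Rmin_l])) as [c [H1 H2]].
    set (dd := Rmin (r / 2 / 2) (/ (A + 1))) in *.
    assert (Hd1 : dd <= r/2/2) by apply Rmin_l. assert (Hd2 : dd <= / (A+1)) by apply Rmin_r.
    assert (Hd0 : 0 < dd) by (apply Rmin_glb_lt; [lra|apply Rinv_0_lt_compat; lra]).
    exists c. split. apply ps_at_shrink with (r/2/2); auto.
    intros n. apply Rle_trans with (Rabs (c n) * (r/2/2) ^ n).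
    apply Rmult_le_compat_l; [apply Rabs_pos|apply pow_incr; lra].
    apply Rle_trans with A; auto. apply Rle_trans with (A + 1); [lra|].
    replace (A + 1) with (/ / (A + 1)) by (field; lra). apply Rinv_le_contravar; auto.
  - exists s, (/ s). split; auto. split. left; apply Rinv_0_lt_compat; auto.
    intros y. destruct (frac_ex y) as [k Hk]. destruct (Hss (y - IZR k) ltac:(lra)) as [c [H1 H2]].
    exists c. split; auto. intros x Hx.
    replace (x - y) with ((x - IZR k) - (y - IZR k)) by ring.
    replace (f x) with (f (x - IZR k)).
    apply H1. replace (x - IZR k - (y - IZR k)) with (x - y) by ring; auto.
    rewrite <- (per_Z f Hper (x - IZR k) k). f_equal; ring.
Qed.

Lemma ps_bound f y s Cc c x : ps_at f y s c -> cb c Cc s -> 0 < s -> 0 <= Cc -> Rabs (x - y) < s ->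
  Rabs (f x) <= Cc / (1 - Rabs (x - y) / s).
Proof.
  intros Hps Hcb Hs HC Hx. assert (Hq : 0 <= Rabs (x - y) / s < 1).
  { split. apply div_nonneg; auto; apply Rabs_pos. apply div_lt1; split; auto; apply Rabs_pos. }
  destruct (is_comp (fun k => c k * (x - y) ^ k) (fun k => Cc * (Rabs (x - y) / s) ^ k)
             (Cc / (1 - Rabs (x - y) / s))) as [l [Hl1 Hl2]].
  - intros k. rewrite Rabs_mult, Rabs_pow_le. assert (H := cb_geom c Cc s (Rabs (x-y)) k Hcb (Rabs_pos _) Hs).
    auto.
  - apply is_geom; auto.
  - rewrite (is_unique _ _ _ (Hps x Hx) Hl1). auto.
Qed.

Definition choose_c (f : R -> R) s Cc (y : R) : nat -> R :=
  epsilon (inhabits (fun _ => 0)) (fun c => ps_at f y s c /\ cb c Cc s).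

Lemma choose_c_ok f s Cc : UA f s Cc -> forall y, ps_at f y s (choose_c f s Cc y) /\ cb (choose_c f s Cc y) Cc s.
Proof.
  intros H y. unfold choose_c. apply (epsilon_spec (inhabits (fun _ => 0)) (fun c => ps_at f y s c /\ cb c Cc s)).
  apply H.
Qed.

Lemma ua_wsum g s Cc (w : nat -> R) W (ctr : nat -> R) : 0 < s -> 0 <= Cc -> UA g s Cc ->
  infinite_sum (fun j => Rabs (w j)) W ->
  real_analytic (fun x => Sum (fun j => w j * g (x + ctr j))).
Proof.
  intros Hs HC Hua HW x0. exists (s/2). split; [lra|].
  set (cf := fun j => choose_c g s Cc (x0 + ctr j)).
  assert (Hcf : forall j, ps_at g (x0 + ctr j) s (cf j) /\ cb (cf j) Cc s).
  { intros j; apply choose_c_ok; auto. }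
  assert (Hcol : forall k, infinite_sum (fun j => w j * cf j k) (Sum (fun j => w j * cf j k))).
  { intros k. apply Sum_spec. apply is_exists_abs with (fun j => Rabs (w j) * (Cc / s ^ k)) (W * (Cc / s^k)).
    - intros j. rewrite Rabs_mult. apply Rmult_le_compat_l; [apply Rabs_pos|].
      destruct (Hcf j) as [_ H]. specialize (H k).
      assert (0 < s ^ k) by (apply pow_lt; auto).
      apply Rmult_le_reg_r with (s ^ k); auto. unfold Rdiv. rewrite Rmult_assoc, Rinv_l; lra.
    - apply is_ext with (fun j => (Cc / s ^ k) * Rabs (w j)). intros; ring.
      rewrite Rmult_comm. apply is_scal; auto. }
  exists (fun k => Sum (fun j => w j * cf j k)).
  intros x Hx. set (t := x - x0).
  set (q := Rabs t / s).
  assert (Hq : 0 <= q < 1) by (unfold q, t in *; split; [apply div_nonneg; auto; apply Rabs_pos|apply div_lt1; split; [apply Rabs_pos|lra]]).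
  assert (Hrow : forall j, infinite_sum (fun k => cf j k * t ^ k) (g (x + ctr j))).
  { intros j. destruct (Hcf j) as [H _]. replace t with ((x + ctr j) - (x0 + ctr j)) by (unfold t; ring).
    apply H. replace (x + ctr j - (x0 + ctr j)) with t by (unfold t; ring). unfold t; lra. }
  assert (Hgb : forall j, Rabs (g (x + ctr j)) <= Cc / (1 - q)).
  { intros j. destruct (Hcf j) as [H1 H2]. unfold q.
    replace t with ((x + ctr j) - (x0 + ctr j)) by (unfold t; ring).
    apply ps_bound with (c := cf j); auto. replace (x + ctr j - (x0 + ctr j)) with t by (unfold t; ring).
    unfold t; lra. }
  unfold Pser.
  apply (interchange (fun j k => w j * (cf j k * t ^ k)) (fun j => w j * g (x + ctr j))
           (fun k => Sum (fun j => w j * cf j k) * t ^ k) _ (fun j => Rabs (w j)) W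
           (fun K => Cc * q ^ S K / (1 - q))).
  - intros j. apply is_scal; auto.
  - apply Sum_spec. apply is_exists_abs with (fun j => Rabs (w j) * (Cc / (1 - q))) (W * (Cc / (1 - q))).
    intros j. rewrite Rabs_mult. apply Rmult_le_compat_l; auto. apply Rabs_pos.
    apply is_ext with (fun j => (Cc / (1 - q)) * Rabs (w j)). intros; ring.
    rewrite Rmult_comm. apply is_scal; auto.
  - intros k. apply is_ext with (fun j => t ^ k * (w j * cf j k)). intros; ring.
    rewrite Rmult_comm. apply is_scal; auto.
  - intros; apply Rabs_pos.
  - auto.
  - replace 0 with (Cc * 0 / (1 - q)) by (field; lra). unfold Rdiv.
    apply cv_ext with (fun K => (Cc * / (1 - q)) * q ^ S K). intros; ring.
    replace (Cc * 0 * / (1 - q)) with ((Cc * / (1 - q)) * 0) by ring.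
    apply cv_scal. apply pow_to_0; auto.
  - intros j K. rewrite sum_scal_l, <- Rmult_minus_distr_l, Rabs_mult.
    apply Rmult_le_compat_l; [apply Rabs_pos|].
    eapply Rle_trans. apply (is_tail_bound _ (fun k => Cc * q ^ k) _ (Cc / (1 - q)) K); auto.
    + intros k. rewrite Rabs_mult, Rabs_pow_le. destruct (Hcf j) as [_ H].
      apply (cb_geom _ Cc s (Rabs t) k H (Rabs_pos _) Hs).
    + apply is_geom; auto.
    + right. rewrite sum_scal_l, sum_geom by lra. field. lra.
Qed.

Lemma is_shift_lead u l n : (forall i, (i < n)%nat -> u i = 0) -> infinite_sum u l ->
  infinite_sum (fun m => u (m + n)%nat) l.
Proof.
  intros Hz H. destruct (is_shift_k u l n H) as [Uk [H1 _]].
  assert (H2 := is_lead_zeros u Uk n Hz H1). rewrite (is_unique _ _ _ H H2). auto.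
Qed.

Definition accum (f : R -> R) x := forall d, 0 < d -> exists z, 0 < Rabs (z - x) < d /\ f z = 0.

Lemma ps_coef_zero f x0 r a : 0 < r -> ps_at f x0 r a -> accum f x0 -> forall n, a n = 0.
Proof.
  intros Hr Hps Hacc n. induction n as [n IH] using lt_wf_ind.
  set (rho := r/2).
  destruct (ps_cb f x0 r a (3*r/4) Hps ltac:(lra)) as [B [HB Hcb]].
  destruct (cb_abs_conv a B (3*r/4) rho Hcb ltac:(unfold rho; lra)) as [A HA].
  destruct (is_shift_k _ _ n HA) as [Wn [HWn _]].
  assert (Hrho : 0 < rho) by (unfold rho; lra).
  assert (Hrn : 0 < rho ^ n) by (apply pow_lt; auto).
  set (W := Wn / rho ^ n).
  assert (HW : infinite_sum (fun m => Rabs (a (m + n)%nat) * rho ^ m) W).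
  { apply is_ext with (fun m => / rho ^ n * (Rabs (a (m + n)%nat) * rho ^ (m + n))).
    intros m. rewrite pow_add. field. lra. unfold W, Rdiv. rewrite Rmult_comm. apply is_scal; auto. }
  assert (HW0 : 0 <= W) by (apply is_nonneg with (2 := HW); intros; apply Rmult_le_pos; [apply Rabs_pos|apply pow_le; lra]).
  apply NNPP; intro Hne. assert (Han : 0 < Rabs (a n)) by (apply Rabs_pos_lt; auto).
  destruct (Hacc (Rmin rho (rho * Rabs (a n) / (W + 1)))) as [z [[Hz1 Hz2] Hz3]].
  { apply Rmin_glb_lt; auto. apply Rdiv_lt_0_compat; [apply Rmult_lt_0_compat|]; lra. }
  set (t := z - x0) in *.
  assert (Ht1 : Rabs t < rho) by (eapply Rlt_le_trans; [apply Hz2|apply Rmin_l]).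
  assert (Ht2 : Rabs t < rho * Rabs (a n) / (W + 1)) by (eapply Rlt_le_trans; [apply Hz2|apply Rmin_r]).
  assert (Hs := Hps z ltac:(unfold rho in Ht1; unfold t in *; lra)). unfold Pser in Hs. rewrite Hz3 in Hs.
  fold t in Hs.
  assert (Hs2 := is_shift_lead (fun i => a i * t ^ i) _ n ltac:(intros i Hi; simpl; rewrite (IH i Hi); ring) Hs).
  assert (Htn : t ^ n <> 0) by (apply pow_nonzero; intro E; rewrite E, Rabs_R0 in Hz1; lra).
  assert (Hs3 : infinite_sum (fun m => a (m + n)%nat * t ^ m) 0).
  { replace 0 with (/ t ^ n * 0) by ring. apply is_ext with (fun m => / t ^ n * (a (m + n)%nat * t ^ (m + n))).
    intros m. rewrite pow_add. field; auto. apply is_scal; auto. }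
  set (q := Rabs t / rho).
  assert (Hq : 0 <= q <= 1) by (unfold q; split; [apply div_nonneg; auto; apply Rabs_pos|left; apply div_lt1; split; auto; apply Rabs_pos]).
  set (v := fun m => (if Nat.eqb m 0 then Rabs (a n) else 0) + q * (Rabs (a (m + n)%nat) * rho ^ m)).
  assert (Hv : infinite_sum v (Rabs (a n) + q * W)).
  { apply is_plus. replace (Rabs (a n)) with (sum_f_R0 (fun m => if Nat.eqb m 0 then Rabs (a n) else 0) 0)
      by reflexivity. apply is_finite. intros k Hk. destruct (Nat.eqb_spec k 0); [lia|auto].
    apply is_scal; auto. }
  assert (Hmaj : forall m, Rabs (a (m + n)%nat * t ^ m) <= v m).
  { intros m. unfold v. rewrite Rabs_mult, Rabs_pow_le. destruct m.
    - simpl. assert (0 <= q * (Rabs (a n) * 1)) by (apply Rmult_le_pos; [lra|]; rewrite Rmult_1_r; apply Rabs_pos). lra.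
    - simpl Nat.eqb. rewrite Rplus_0_l.
      replace (Rabs t ^ S m) with (q ^ S m * rho ^ S m).
      2:{ unfold q, Rdiv. rewrite Rpow_mult_distr, pow_inv. field. apply pow_nonzero; lra. }
      assert (q ^ S m <= q) by (rewrite <- (pow_1 q) at 2; apply pow_mono_dec; auto; lia).
      assert (0 <= Rabs (a (S m + n)%nat) * rho ^ S m) by (apply Rmult_le_pos; [apply Rabs_pos|apply pow_le; lra]).
      replace (Rabs (a (S m + n)%nat) * (q ^ S m * rho ^ S m)) with (q ^ S m * (Rabs (a (S m + n)%nat) * rho ^ S m)) by ring.
      apply Rmult_le_compat_r; auto. }
  assert (T := is_tail_bound _ _ _ _ 0 Hmaj Hs3 Hv). simpl in T. unfold v in T. simpl in T.
  rewrite Rmult_1_r, Rmult_1_r, Rminus_0_l, Rabs_Ropp in T.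
  assert (q * Rabs (a n) >= 0) by (apply Rle_ge, Rmult_le_pos; [lra|apply Rabs_pos]).
  assert (Rabs (a n) <= q * W) by lra.
  assert (q * W < Rabs (a n)).
  { unfold q. apply Rle_lt_trans with (rho * Rabs (a n) / (W + 1) / rho * W).
    apply Rmult_le_compat_r; auto. unfold Rdiv. apply Rmult_le_compat_r. left; apply Rinv_0_lt_compat; auto.
    left; auto. replace (rho * Rabs (a n) / (W + 1) / rho * W) with (Rabs (a n) * (W / (W + 1))) by (field; lra).
    rewrite <- (Rmult_1_r (Rabs (a n))) at 2. apply Rmult_lt_compat_l; auto. apply div_lt1; lra. }
  lra.
Qed.

Lemma ra_loc_zero f x : real_analytic f -> accum f x -> exists d, 0 < d /\ forall z, Rabs (z - x) < d -> f z = 0.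
Proof.
  intros Hf Hacc. destruct (Hf x) as [r [Hr [a Ha]]].
  assert (Hz := ps_coef_zero f x r a Hr Ha Hacc).
  exists r; split; auto. intros z Hzr. specialize (Ha z Hzr). unfold Pser in Ha.
  apply (is_unique _ _ _ Ha). apply is_ext with (fun _ => 0). intros; rewrite Hz; ring.
  intros e He; exists 0%nat; intros; unfold Rdist; rewrite sum_zero, Rminus_0_r, Rabs_R0; auto.
Qed.

Lemma ra_zero_right f x : real_analytic f -> (exists d, 0 < d /\ forall z, Rabs (z - x) < d -> f z = 0) ->
  forall y, x <= y -> f y = 0.
Proof.
  intros Hf [d [Hd Hdd]] y Hxy. apply NNPP; intro Hy.
  set (E := fun b => x <= b /\ forall z, x <= z <= b -> f z = 0).
  assert (HE : E x). { split; [lra|]. intros z Hz. apply Hdd. replace (z - x) with 0 by lra. rewrite Rabs_R0; auto. }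
  assert (Hb : bound E). { exists y. intros b [Hb1 Hb2]. destruct (Rle_dec b y); auto. exfalso; apply Hy, Hb2; lra. }
  destruct (completeness E Hb (ex_intro _ x HE)) as [c [Hc1 Hc2]].
  assert (Hxd : E (x + d/2)).
  { split; [lra|]. intros z Hz. apply Hdd. apply Rabs_def1; lra. }
  assert (Hcx : x + d/2 <= c) by (apply Hc1; auto).
  assert (Hbelow : forall z, x <= z < c -> f z = 0).
  { intros z Hz. apply NNPP; intro N. assert (c <= z); [|lra].
    apply Hc2. intros b [Hb1 Hb2]. destruct (Rle_dec b z); auto. exfalso; apply N, Hb2; lra. }
  assert (Hacc : accum f c).
  { intros e He. exists (c - Rmin e (c - x) / 2). assert (0 < Rmin e (c - x)) by (apply Rmin_glb_lt; lra).
    assert (Rmin e (c - x) <= e) by apply Rmin_l. assert (Rmin e (c - x) <= c - x) by apply Rmin_r.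
    split. split; apply Rabs_def1 || (rewrite Rabs_left; lra); lra.
    apply Hbelow; lra. }
  destruct (ra_loc_zero f c Hf Hacc) as [dc [Hdc Hdcc]].
  assert (E (c + dc/2)).
  { split; [lra|]. intros z Hz. destruct (Rlt_le_dec z c). apply Hbelow; lra. apply Hdcc; apply Rabs_def1; lra. }
  assert (c + dc/2 <= c) by (apply Hc1; auto). lra.
Qed.

Lemma ra_reflect f : real_analytic f -> real_analytic (fun x => f (- x)).
Proof.
  intros Hf x0. destruct (Hf (- x0)) as [r [Hr [a Ha]]]. exists r; split; auto.
  exists (fun n => a n * (-1) ^ n). intros x Hx. unfold Pser.
  assert (H := Ha (- x) ltac:(replace (- x - - x0) with (- (x - x0)) by ring; rewrite Rabs_Ropp; auto)).
  unfold Pser in H. apply is_ext with (2 := H). intros n. replace (- x - - x0) with ((-1) * (x - x0)) by ring.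
  rewrite Rpow_mult_distr. ring.
Qed.

Lemma ra_identity f x : real_analytic f -> accum f x -> forall y, f y = 0.
Proof.
  intros Hf Hacc y. destruct (Rle_dec x y).
  - apply ra_zero_right with x; auto. apply ra_loc_zero; auto.
  - replace y with (- - y) by ring.
    apply (ra_zero_right (fun z => f (- z)) (- x)); [apply ra_reflect; auto| |lra].
    destruct (ra_loc_zero f x Hf Hacc) as [d [Hd Hdd]]. exists d; split; auto.
    intros z Hz. apply Hdd. replace (- z - x) with (- (z - - x)) by ring. rewrite Rabs_Ropp; auto.
Qed.

Lemma Rint_0 g a : contR g -> Rint g a a = 0.
Proof. intros H. assert (E := Rint_chasles g a a a H). lra. Qed.

Lemma zero_deriv_const2 G a b : (forall x, derivable_pt_lim G x 0) -> G b = G a.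
Proof.
  intros H. destruct (Rle_dec a b). apply zero_deriv_const; auto.
  symmetry; apply zero_deriv_const; auto; lra.
Qed.

Lemma per_bound g : contR g -> (forall x, g (x + 1) = g x) -> exists M, 0 <= M /\ forall x, Rabs (g x) <= M.
Proof.
  intros Hc Hp. destruct (continuity_ab_maj (fun x => Rabs (g x)) 0 1 ltac:(lra)) as [m [Hm _]].
  intros c _; apply cpt_abs; auto.
  exists (Rabs (g m)). split; [apply Rabs_pos|]. intros x. destruct (frac_ex x) as [k Hk].
  replace x with ((x - IZR k) + IZR k) by ring. rewrite (per_Z g Hp). apply Hm. lra.
Qed.

Lemma cont_T2_y phi x : cont_T2 phi -> contR (phi x).
Proof.
  intros [_ Hc] y e He. destruct (Hc x y e He) as [d [Hd Hdd]]. exists d; split; auto.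
  intros y' [_ Hy']. simpl in *. unfold Rdist in *. apply Hdd; auto. rewrite Rminus_diag, Rabs_R0; auto.
Qed.

Lemma cont_comp2 phi u v : cont_T2 phi -> contR u -> contR v -> contR (fun x => phi (u x) (v x)).
Proof.
  intros [_ Hc] Hu Hv x e He. destruct (Hc (u x) (v x) e He) as [d [Hd Hdd]].
  destruct (Hu x d Hd) as [d1 [Hd1 Hdd1]]. destruct (Hv x d Hd) as [d2 [Hd2 Hdd2]].
  exists (Rmin d1 d2). split. apply Rmin_glb_lt; auto.
  intros x' [Hx'1 Hx'2]. simpl in *. unfold Rdist in *.
  destruct (Req_dec x' x) as [->|Hne]. rewrite Rminus_diag, Rabs_R0; auto.
  apply Hdd.
  - apply Hdd1. split; [exact Hx'1|]. eapply Rlt_le_trans; [apply Hx'2|apply Rmin_l].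
  - apply Hdd2. split; [exact Hx'1|]. eapply Rlt_le_trans; [apply Hx'2|apply Rmin_r].
Qed.

Lemma phi_bound phi : cont_T2 phi -> exists M, 0 <= M /\ forall x y, Rabs (phi x y) <= M.
Proof.
  intros H. destruct (phi_unif phi H 1 ltac:(lra)) as [rho [Hrho Hrr]].
  destruct (gauge_unif (fun x s => forall x' y, Rabs (x' - x) < s -> Rabs (phi x' y) <= / s)) as [s [Hs Hss]].
  - intros x s s' H1 H2 x' y Hx'. apply Rle_trans with (/ s). apply H1; lra. apply Rinv_le_contravar; lra.
  - intros x0 _. destruct (per_bound (phi x0)) as [M0 [HM0 HM0b]].
    apply cont_T2_y; auto. intros y; apply (proj1 H).
    exists (Rmin (rho/2) (/ (M0 + 1))). split. apply Rmin_glb_lt; [lra|]. apply Rinv_0_lt_compat; lra.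
    intros x Hx x' y Hx'.
    assert (Hd1 : Rmin (rho/2) (/ (M0 + 1)) <= rho/2) by apply Rmin_l.
    assert (Hd2 : Rmin (rho/2) (/ (M0 + 1)) <= / (M0 + 1)) by apply Rmin_r.
    assert (Hd0 : 0 < Rmin (rho/2) (/ (M0 + 1))) by (apply Rmin_glb_lt; [lra|]; apply Rinv_0_lt_compat; lra).
    apply Rle_trans with (M0 + 1).
    + assert (A := Hrr x0 x' y ltac:(apply Rabs_lt_inv in Hx; apply Rabs_lt_inv in Hx'; apply Rabs_def1; lra)).
      specialize (HM0b y). replace (phi x' y) with ((phi x' y - phi x0 y) + phi x0 y) by ring.
      eapply Rle_trans; [apply Rabs_triang|]. lra.
    + apply Rle_trans with (/ / (M0 + 1)). right; field; lra. apply Rinv_le_contravar; auto.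
  - exists (/ s). split. left; apply Rinv_0_lt_compat; auto.
    intros x y. destruct (frac_ex x) as [k Hk]. specialize (Hss (x - IZR k) ltac:(lra) (x - IZR k) y
      ltac:(rewrite Rminus_diag, Rabs_R0; auto)).
    rewrite <- (per_Z (fun t => phi t y) ltac:(intros; apply (proj1 H)) (x - IZR k) k) in Hss.
    replace (x - IZR k + IZR k) with x in Hss by ring. auto.
Qed.

Definition Gphi (phi : R -> R -> R) (t : R) := Rint (fun y => phi t y) 0 1.

Lemma Gphi_cont phi : cont_T2 phi -> contR (Gphi phi).
Proof.
  intros H x e He. destruct (phi_unif phi H (e/2) ltac:(lra)) as [rho [Hrho Hrr]].
  exists rho. split; auto. intros x' [_ Hx']. simpl in *. unfold Rdist in *.
  unfold Gphi. rewrite <- Rint_minus by (apply cont_T2_y; auto).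
  eapply Rle_lt_trans. apply Rint_bound with (B := e/2). lra.
  apply contR_minus; apply cont_T2_y; auto.
  intros y _. left. apply Hrr; auto. lra.
Qed.

Lemma Gphi_per phi : cont_T2 phi -> forall t, Gphi phi (t + 1) = Gphi phi t.
Proof.
  intros H t. unfold Gphi. f_equal. apply functional_extensionality. intros y. apply (proj1 H).
Qed.

Lemma Rint_per_step g c : contR g -> (forall x, g (x + 1) = g x) ->
  Rint g 0 (c + 1) - Rint g 0 c = Rint g 0 1.
Proof.
  intros Hc Hp.
  assert (E := zero_deriv_const2 (fun t => Rint g 0 (t + 1) - Rint g 0 t) 0 c).
  cbv beta in E. rewrite E. rewrite Rplus_0_l, Rint_0; auto. ring.
  intros x. assert (H := dpl_minus (fun t => Rint g 0 (t + 1)) (fun t => Rint g 0 t) x _ _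
     (dpl_shift _ 1 x _ (Rint_deriv g (x + 1) Hc)) (Rint_deriv g x Hc)).
  rewrite Hp, Rminus_diag in H. exact H.
Qed.

Lemma Rint_shift_per g c : contR g -> (forall x, g (x + 1) = g x) ->
  Rint (fun x => g (x + c)) 0 1 = Rint g 0 1.
Proof.
  intros Hc Hp. rewrite (FTC (fun x => g (x + c)) (fun x => Rint g 0 (x + c)) 0 1); auto.
  - rewrite Rplus_0_l, Rplus_comm. apply Rint_per_step; auto.
  - lra.
  - apply contR_shift; auto.
  - intros x _. apply dpl_shift. apply Rint_deriv; auto.
Qed.

Lemma prim_bound g B : contR g -> (forall x, g (x + 1) = g x) -> Rint g 0 1 = 0 ->
  (forall t, Rabs (g t) <= B) -> forall t, Rabs (Rint g 0 t) <= B.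
Proof.
  intros Hc Hp H0 HB t.
  assert (Pp : forall t, Rint g 0 (t + 1) = Rint g 0 t).
  { intros s. assert (E := Rint_per_step g s Hc Hp). lra. }
  destruct (frac_ex t) as [k Hk].
  assert (E : Rint g 0 ((t - IZR k) + IZR k) = Rint g 0 (t - IZR k)) by (apply (per_Z (fun s => Rint g 0 s) Pp)).
  replace (t - IZR k + IZR k) with t in E by ring. rewrite E.
  eapply Rle_trans. apply Rint_bound_gen with (B := B); auto.
  rewrite Rminus_0_r, Rabs_pos_eq by lra.
  rewrite <- (Rmult_1_r B) at 2. apply Rmult_le_compat_l. apply Rle_trans with (Rabs (g 0)); [apply Rabs_pos|auto].
  lra.
Qed.

Lemma eq_core g psi psi' a b c B th : a <= b -> contR g -> (forall t, g (t + 1) = g t) ->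
  Rint g 0 1 = 0 -> (forall t, Rabs (g t) <= B) -> contR psi -> contR psi' ->
  (forall x, a <= x <= b -> derivable_pt_lim psi x (psi' x)) -> c <> 0 ->
  (forall x, a <= x <= b -> Rabs (psi' x - c) <= th * Rabs c) ->
  Rabs (Rint (fun x => g (psi x)) a b) <= 2 * B / Rabs c + B * th * (b - a).
Proof.
  intros Hab Hg Hp H0 HB Hpsi Hpsi' Hd Hc Hth.
  assert (Hgp : contR (fun x => g (psi x))) by (intros x; apply cpt_comp; auto).
  assert (C1 : contR (fun x => g (psi x) * psi' x)) by (apply contR_mult; auto).
  assert (C2 : contR (fun x => g (psi x) * (1 - psi' x / c))).
  { apply contR_mult; auto. apply contR_minus. apply contR_const. intros x.
    apply cpt_ext with (fun y => / c * psi' y). intros; unfold Rdiv; ring. apply cpt_scal; auto. }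
  assert (I1 : Rint (fun x => g (psi x) * psi' x) a b = Rint g 0 (psi b) - Rint g 0 (psi a)).
  { apply (FTC _ (fun x => Rint g 0 (psi x))); auto. intros x Hx.
    apply (dpl_comp psi (fun t => Rint g 0 t)). apply Hd; auto. apply Rint_deriv; auto. }
  assert (B1 : Rabs (Rint (fun x => g (psi x) * psi' x) a b) <= 2 * B).
  { rewrite I1. unfold Rminus. eapply Rle_trans; [apply Rabs_triang|]. rewrite Rabs_Ropp.
    assert (Hb1 := prim_bound g B Hg Hp H0 HB (psi b)). assert (Hb2 := prim_bound g B Hg Hp H0 HB (psi a)). lra. }
  assert (B2 : Rabs (Rint (fun x => g (psi x) * (1 - psi' x / c)) a b) <= B * th * (b - a)).
  { apply Rint_bound; auto. intros x Hx. rewrite Rabs_mult. apply Rmult_le_compat; auto; try apply Rabs_pos.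
    replace (1 - psi' x / c) with (- (psi' x - c) / c) by (field; auto). unfold Rdiv.
    rewrite Rabs_mult, Rabs_Ropp, Rabs_inv. assert (0 < Rabs c) by (apply Rabs_pos_lt; auto).
    apply Rmult_le_reg_r with (Rabs c); auto. rewrite Rmult_assoc, Rinv_l by lra. rewrite Rmult_1_r. apply Hth; auto. }
  assert (E : Rint (fun x => g (psi x)) a b =
      / c * Rint (fun x => g (psi x) * psi' x) a b + Rint (fun x => g (psi x) * (1 - psi' x / c)) a b).
  { rewrite <- Rint_scal, <- Rint_plus; auto. f_equal. apply functional_extensionality; intros x. field; auto.
    apply contR_scal; auto. }
  rewrite E. eapply Rle_trans; [apply Rabs_triang|]. rewrite Rabs_mult, Rabs_inv.
  assert (0 < Rabs c) by (apply Rabs_pos_lt; auto).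
  apply Rplus_le_compat; auto. unfold Rdiv. rewrite (Rmult_comm (2 * B)). apply Rmult_le_compat_l; auto.
  left; apply Rinv_0_lt_compat; auto.
Qed.

Definition Bd (In : nat -> R -> R) u v e := exists N, forall n, (n >= N)%nat -> Rabs (Rint (In n) u v) <= e.

Lemma Bd_add In u v w e1 e2 : (forall n, contR (In n)) -> Bd In u v e1 -> Bd In v w e2 -> Bd In u w (e1 + e2).
Proof.
  intros Hc [N1 H1] [N2 H2]. exists (N1 + N2)%nat. intros n Hn.
  rewrite <- (Rint_chasles (In n) u v w (Hc n)).
  eapply Rle_trans; [apply Rabs_triang|]. apply Rplus_le_compat; [apply H1|apply H2]; lia.
Qed.

Lemma Bd_mono In u v e e' : e <= e' -> Bd In u v e -> Bd In u v e'.
Proof. intros H [N HN]. exists N. intros n Hn. specialize (HN n Hn). lra. Qed.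

Lemma Bd_triv In u v M : u <= v -> (forall n, contR (In n)) -> (forall n x, Rabs (In n x) <= M) ->
  Bd In u v (M * (v - u)).
Proof.
  intros Huv Hc HM. exists 0%nat. intros n _. apply Rint_bound; auto.
Qed.

Lemma Bd_pieces In u v m e : u <= v -> (0 < m)%nat -> (forall n, contR (In n)) ->
  (forall i, (i < m)%nat -> Bd In (u + INR i * (v - u) / INR m) (u + INR (S i) * (v - u) / INR m) e) ->
  Bd In u v (INR m * e).
Proof.
  intros Huv Hm Hc H.
  assert (K : forall k, (k <= m)%nat -> Bd In u (u + INR k * (v - u) / INR m) (INR k * e)).
  { induction k; intros Hk.
    - exists 0%nat. intros n _. simpl. replace (u + 0 * (v - u) / INR m) with u by (field; apply not_0_INR; lia).
      rewrite Rint_0, Rabs_R0; [right; ring|auto].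
    - replace (INR (S k) * e) with (INR k * e + e) by (rewrite S_INR; ring).
      apply Bd_add with (u + INR k * (v - u) / INR m); [auto| apply IHk; lia | apply H; lia]. }
  specialize (K m (le_n m)). replace (u + INR m * (v - u) / INR m) with v in K; auto.
  field. apply not_0_INR; lia.
Qed.

Lemma Bd_zero_len In u : (forall n, contR (In n)) -> forall e, 0 <= e -> Bd In u u e.
Proof. intros Hc e He. exists 0%nat. intros n _. rewrite Rint_0, Rabs_R0; auto. Qed.

Lemma Rabs_pow_P P n : Rabs (P ^ n) = Rabs P ^ n.
Proof. symmetry; apply RPow_abs. Qed.

Lemma piece_bound phi psi dpsi hh P s MF M u v d0 e1 e2 n :
  cont_T2 phi -> 0 <= M -> (forall x y, Rabs (phi x y) <= M) -> u <= v -> P <> 0 -> 0 <= MF ->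
  (forall x y, u <= x <= v -> Rabs (phi (x + s) y - phi (u + s) y) <= e1) ->
  (forall x, u <= x <= v -> Rabs (hh x - hh u) <= e2) -> 0 < d0 -> d0 <= Rabs (hh u) ->
  contR psi -> contR dpsi -> (forall x, derivable_pt_lim psi x (dpsi x)) ->
  (forall x, Rabs (dpsi x / P ^ n - hh x) <= MF / Rabs P ^ n) ->
  Rabs (Rint (fun x => phi (x + s) (psi x) - Gphi phi (x + s)) u v) <=
    2 * e1 * (v - u) + 4 * M / (Rabs P ^ n * d0) + 2 * M * ((MF / Rabs P ^ n + e2) / d0) * (v - u).
Proof.
  intros Hphi HM HMb Huv HP HMF He1 He2 Hd0 Hd0u Hpsi Hdpsi Hder Happ.
  assert (HPn : 0 < Rabs P ^ n) by (apply pow_lt; apply Rabs_pos_lt; auto).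
  set (g := fun t => phi (u + s) t - Gphi phi (u + s)).
  assert (Hgc : contR g) by (apply contR_minus; [apply cont_T2_y; auto|apply contR_const]).
  assert (Hcx : contR (fun x => phi (x + s) (psi x) - Gphi phi (x + s))).
  { apply contR_minus. apply cont_comp2; auto. intros x; apply cpt_plus; [apply cpt_id|apply cpt_const].
    apply contR_shift, Gphi_cont; auto. }
  assert (Hgpsi : contR (fun x => g (psi x))) by (intros x; apply cpt_comp; auto).
  assert (A1 : Rabs (Rint (fun x => phi (x + s) (psi x) - Gphi phi (x + s)) u v - Rint (fun x => g (psi x)) u v)
                <= (2 * e1) * (v - u)).
  { rewrite <- Rint_minus by auto. apply Rint_bound; auto. apply contR_minus; auto.
    intros x Hx. unfold g.
    replace (phi (x + s) (psi x) - Gphi phi (x + s) - (phi (u + s) (psi x) - Gphi phi (u + s)))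
      with ((phi (x + s) (psi x) - phi (u + s) (psi x)) - (Gphi phi (x + s) - Gphi phi (u + s))) by ring.
    eapply Rle_trans; [apply Rabs_triang|]. rewrite Rabs_Ropp.
    assert (Rabs (Gphi phi (x + s) - Gphi phi (u + s)) <= e1).
    { unfold Gphi. rewrite <- Rint_minus by (apply cont_T2_y; auto).
      replace e1 with (e1 * (1 - 0)) by ring. apply Rint_bound. lra.
      apply contR_minus; apply cont_T2_y; auto. intros y _; apply He1; auto. }
    specialize (He1 x (psi x) Hx). lra. }
  assert (A2 : Rabs (Rint (fun x => g (psi x)) u v) <=
     2 * (2 * M) / Rabs (P ^ n * hh u) + (2 * M) * ((MF / Rabs P ^ n + e2) / d0) * (v - u)).
  { apply eq_core with (psi' := dpsi); auto.
    - intros t; unfold g. rewrite (proj2 (proj1 Hphi (u + s) t)). reflexivity.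
    - unfold g. rewrite Rint_minus by (auto using contR_const; apply cont_T2_y; auto).
      rewrite Rint_const. unfold Gphi. rewrite Rminus_0_r, Rmult_1_r. apply Rminus_diag_eq. reflexivity.
    - intros t; unfold g. unfold Gphi.
      assert (Rabs (Rint (fun y => phi (u + s) y) 0 1) <= M * (1 - 0)).
      { apply Rint_bound. lra. apply cont_T2_y; auto. intros; auto. }
      eapply Rle_trans; [apply Rabs_triang|]. rewrite Rabs_Ropp. specialize (HMb (u + s) t). lra.
    - apply Rmult_integral_contrapositive. split. apply pow_nonzero; auto.
      intro E. rewrite E, Rabs_R0 in Hd0u. lra.
    - intros x Hx. rewrite Rabs_mult, Rabs_pow_P.
      replace (dpsi x - P ^ n * hh u) with (P ^ n * ((dpsi x / P ^ n - hh x) + (hh x - hh u)))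
        by (field; apply pow_nonzero; auto).
      rewrite Rabs_mult, Rabs_pow_P.
      replace ((MF / Rabs P ^ n + e2) / d0 * (Rabs P ^ n * Rabs (hh u))) with
        (Rabs P ^ n * ((MF / Rabs P ^ n + e2) * (Rabs (hh u) / d0))) by (field; lra).
      apply Rmult_le_compat_l; [lra|].
      eapply Rle_trans; [apply Rabs_triang|].
      assert (1 <= Rabs (hh u) / d0).
      { apply Rmult_le_reg_r with d0; auto. unfold Rdiv; rewrite Rmult_assoc, Rinv_l; lra. }
      assert (0 <= MF / Rabs P ^ n) by (apply div_nonneg; auto).
      assert (0 <= e2) by (specialize (He2 u ltac:(lra)); rewrite Rminus_diag, Rabs_R0 in He2; auto).
      specialize (Happ x). specialize (He2 x Hx).
      assert (0 <= MF / Rabs P ^ n + e2) by lra.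
      apply Rle_trans with ((MF / Rabs P ^ n + e2) * 1); [lra|]. apply Rmult_le_compat_l; auto. }
  assert (A3 : 2 * (2 * M) / Rabs (P ^ n * hh u) <= 4 * M / (Rabs P ^ n * d0)).
  { rewrite Rabs_mult, Rabs_pow_P. unfold Rdiv. replace (2 * (2 * M)) with (4 * M) by ring.
    apply Rmult_le_compat_l; [lra|]. apply Rinv_le_contravar. apply Rmult_lt_0_compat; auto.
    apply Rmult_le_compat_l; lra. }
  apply Rabs_le_inv in A1. apply Rabs_le_inv in A2. apply Rabs_le. lra.
Qed.

Lemma In_cont (phi : R -> R -> R) (psi : nat -> R -> R) (shift : nat -> R) : cont_T2 phi -> (forall n, contR (psi n)) ->
  forall n, contR (fun x => phi (x + shift n) (psi n x) - Gphi phi (x + shift n)).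
Proof.
  intros Hphi Hpsi n. apply contR_minus. apply cont_comp2; auto.
  intros x; apply cpt_plus; [apply cpt_id|apply cpt_const].
  apply contR_shift, Gphi_cont; auto.
Qed.

Lemma good_interval (phi : R -> R -> R) (psi dpsi : nat -> R -> R) (hh : R -> R) (P : R) (shift : nat -> R) (MF M a b : R) :
  cont_T2 phi -> 0 <= M -> (forall x y, Rabs (phi x y) <= M) -> 2 <= Rabs P -> 0 <= MF ->
  a <= b -> contR hh -> (forall x, a <= x <= b -> hh x <> 0) ->
  (forall n, contR (psi n)) -> (forall n, contR (dpsi n)) ->
  (forall n x, derivable_pt_lim (psi n) x (dpsi n x)) ->
  (forall n x, Rabs (dpsi n x / P ^ n - hh x) <= MF / Rabs P ^ n) ->
  forall eps, 0 < eps -> Bd (fun n x => phi (x + shift n) (psi n x) - Gphi phi (x + shift n)) a b eps.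
Proof.
  intros Hphi HM HMb HP HMF Hab Hhc Hhz Hpsi Hdpsi Hder Happ eps Heps.
  assert (HIc := In_cont phi psi shift Hphi Hpsi).
  destruct (Req_dec a b) as [<-|Hab']. apply Bd_zero_len; auto; lra.
  set (L := b - a). assert (HL : 0 < L) by (unfold L; lra).
  destruct (continuity_ab_min (fun x => Rabs (hh x)) a b Hab) as [m0 [Hm0 Hm0ab]].
  { intros c _; apply cpt_abs; auto. }
  set (d0 := Rabs (hh m0)). assert (Hd0 : 0 < d0) by (apply Rabs_pos_lt; apply Hhz; auto).
  set (e1 := eps / (8 * (L + 1))). assert (He1 : 0 < e1) by (unfold e1; apply Rdiv_lt_0_compat; lra).
  destruct (phi_unif phi Hphi e1 He1) as [rho1 [Hrho1 Hrr1]].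
  set (e2 := eps * d0 / (8 * (2 * M + 1) * (L + 1))).
  assert (He2 : 0 < e2) by (unfold e2; apply Rdiv_lt_0_compat; [apply Rmult_lt_0_compat|]; nra).
  destruct (Heine hh (fun c => a <= c <= b) (compact_P3 a b) ltac:(intros; apply Hhc) (mkposreal e2 He2))
    as [d2 Hd2].
  set (lam := Rmin rho1 d2). assert (Hlam : 0 < lam) by (apply Rmin_glb_lt; auto; apply cond_pos).
  destruct (archimed_cor1 (lam / L) ltac:(apply Rdiv_lt_0_compat; auto)) as [m [Hm1 Hm2]].
  assert (Hmpos : 0 < INR m) by (apply lt_0_INR; auto).
  set (ell := L / INR m).
  assert (Hell : 0 < ell) by (unfold ell; apply Rdiv_lt_0_compat; auto).
  assert (Hell2 : ell < lam).
  { unfold ell. apply Rmult_lt_reg_r with (/ L). apply Rinv_0_lt_compat; auto.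
    replace (L / INR m * / L) with (/ INR m) by (field; lra). replace (lam * / L) with (lam / L) by auto. auto. }
  assert (Hell3 : ell <= L).
  { unfold ell. apply Rmult_le_reg_r with (INR m); auto. unfold Rdiv. rewrite Rmult_assoc, Rinv_l by lra.
    rewrite Rmult_1_r. rewrite <- (Rmult_1_r L) at 1. apply Rmult_le_compat_l; [lra|].
    apply (le_INR 1); lia. }
  apply Bd_mono with (INR m * (eps / INR m)). right; field; lra.
  apply Bd_pieces; auto.
  intros i Hi.
  set (u := a + INR i * (b - a) / INR m). set (v := a + INR (S i) * (b - a) / INR m).
  assert (Hu : u = a + INR i * ell) by (unfold u, ell, L; field; lra).
  assert (Hv : v = u + ell) by (unfold v, u, ell, L; rewrite S_INR; field; lra).
  assert (Hi' : INR (S i) <= INR m) by (apply le_INR; lia).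
  assert (Hau : a <= u) by (rewrite Hu; assert (0 <= INR i) by apply pos_INR; nra).
  assert (Hvb : v <= b).
  { rewrite Hv, Hu. replace (a + INR i * ell + ell) with (a + INR (S i) * ell) by (rewrite S_INR; ring).
    apply Rle_trans with (a + INR m * ell). apply Rplus_le_compat_l. apply Rmult_le_compat_r; lra.
    unfold ell, L. right; field; lra. }
  set (Q := 4 * M + 2 * M * MF * L).
  assert (HQ : 0 <= Q) by (unfold Q; assert (0 <= M * MF * L) by (apply Rmult_le_pos; [apply Rmult_le_pos|]; lra); lra).
  destruct (Pow_x_infinity P ltac:(lra) (2 * INR m * Q / (eps * d0) + 1)) as [N HN].
  exists N. intros n Hn.
  assert (HPn : 0 < Rabs P ^ n) by (apply pow_lt; lra).
  assert (HPnK : 2 * INR m * Q / (eps * d0) + 1 <= Rabs P ^ n).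
  { specialize (HN n Hn). rewrite Rabs_pow_P in HN. lra. }
  eapply Rle_trans.
  apply (piece_bound phi (psi n) (dpsi n) hh P (shift n) MF M u v d0 e1 e2 n); auto.
  - lra.
  - intro E; rewrite E, Rabs_R0 in HP; lra.
  - intros x y Hx. left. apply Hrr1. replace (x + shift n - (u + shift n)) with (x - u) by ring.
    rewrite Rabs_pos_eq by lra. apply Rle_lt_trans with ell. lra. eapply Rlt_le_trans; [apply Hell2|apply Rmin_l].
  - intros x Hx. left. apply Hd2. lra. lra. rewrite Rabs_pos_eq by lra.
    apply Rle_lt_trans with ell. lra. eapply Rlt_le_trans; [apply Hell2|apply Rmin_r].
  - apply Hm0; lra.
  -
    rewrite Hv. replace (u + ell - u) with ell by ring.
    assert (T1 : 2 * e1 * ell <= eps / INR m / 4).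
    { unfold e1, ell. replace (2 * (eps / (8 * (L + 1))) * (L / INR m)) with ((eps / INR m / 4) * (L / (L + 1))) by (field; lra).
      rewrite <- (Rmult_1_r (eps / INR m / 4)) at 2. apply Rmult_le_compat_l.
      apply div_nonneg; [apply div_nonneg|]; lra. left; apply div_lt1; lra. }
    assert (T2 : 2 * M * (e2 / d0) * ell <= eps / INR m / 4).
    { unfold e2, ell. replace (2 * M * (eps * d0 / (8 * (2 * M + 1) * (L + 1)) / d0) * (L / INR m))
        with ((eps / INR m / 4) * ((M / (2 * M + 1)) * (L / (L + 1)))) by (field; lra).
      rewrite <- (Rmult_1_r (eps / INR m / 4)) at 2. apply Rmult_le_compat_l.
      apply div_nonneg; [apply div_nonneg|]; lra.
      assert (M / (2 * M + 1) <= 1) by (left; apply div_lt1; lra).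
      assert (L / (L + 1) <= 1) by (left; apply div_lt1; lra).
      assert (0 <= M / (2 * M + 1)) by (apply div_nonneg; lra).
      assert (0 <= L / (L + 1)) by (apply div_nonneg; lra). nra. }
    assert (T3 : 4 * M / (Rabs P ^ n * d0) + 2 * M * (MF / Rabs P ^ n / d0) * ell <= eps / INR m / 2).
    { apply Rle_trans with (Q / (Rabs P ^ n * d0)).
      - unfold Q. replace (4 * M / (Rabs P ^ n * d0) + 2 * M * (MF / Rabs P ^ n / d0) * ell)
          with ((4 * M + 2 * M * MF * ell) / (Rabs P ^ n * d0)) by (field; lra).
        unfold Rdiv. apply Rmult_le_compat_r. left; apply Rinv_0_lt_compat; apply Rmult_lt_0_compat; lra.
        assert (M * MF * ell <= M * MF * L) by (apply Rmult_le_compat_l; [apply Rmult_le_pos|]; lra). lra.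
      - assert (Hk : 2 * INR m * Q / (eps * d0) <= Rabs P ^ n) by lra.
        apply Rmult_le_reg_r with (Rabs P ^ n * d0 * (2 * INR m / eps)).
        apply Rmult_lt_0_compat; [apply Rmult_lt_0_compat; lra| apply Rdiv_lt_0_compat; lra].
        replace (Q / (Rabs P ^ n * d0) * (Rabs P ^ n * d0 * (2 * INR m / eps))) with (2 * INR m * Q / eps) by (field; repeat split; lra).
        replace (eps / INR m / 2 * (Rabs P ^ n * d0 * (2 * INR m / eps))) with (Rabs P ^ n * d0) by (field; lra).
        apply Rmult_le_reg_r with (/ d0). apply Rinv_0_lt_compat; auto.
        replace (2 * INR m * Q / eps * / d0) with (2 * INR m * Q / (eps * d0)) by (field; lra).
        replace (Rabs P ^ n * d0 * / d0) with (Rabs P ^ n) by (field; lra). auto. }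
    replace (2 * M * ((MF / Rabs P ^ n + e2) / d0) * ell) with
      (2 * M * (MF / Rabs P ^ n / d0) * ell + 2 * M * (e2 / d0) * ell) by (field; lra).
    lra.
Qed.

Lemma In_bound phi psi shift M : cont_T2 phi -> (forall x y, Rabs (phi x y) <= M) ->
  forall (n : nat) x, Rabs (phi (x + shift n) (psi n x) - Gphi phi (x + shift n)) <= 2 * M.
Proof.
  intros Hphi HM n x. eapply Rle_trans; [apply Rabs_triang|]. rewrite Rabs_Ropp.
  assert (Rabs (Gphi phi (x + shift n)) <= M * (1 - 0)).
  { unfold Gphi. apply Rint_bound. lra. apply cont_T2_y; auto. intros; auto. }
  specialize (HM (x + shift n) (psi n x)). lra.
Qed.

Lemma cell_bound (phi : R -> R -> R) (psi dpsi : nat -> R -> R) (hh : R -> R) (P : R) (shift : nat -> R) (MF M A B : R) :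
  cont_T2 phi -> 0 <= M -> (forall x y, Rabs (phi x y) <= M) -> 2 <= Rabs P -> 0 <= MF ->
  A <= B -> contR hh ->
  (forall z1 z2, A <= z1 <= B -> A <= z2 <= B -> hh z1 = 0 -> hh z2 = 0 -> z1 = z2) ->
  (forall n, contR (psi n)) -> (forall n, contR (dpsi n)) ->
  (forall n x, derivable_pt_lim (psi n) x (dpsi n x)) ->
  (forall n x, Rabs (dpsi n x / P ^ n - hh x) <= MF / Rabs P ^ n) ->
  forall eps, 0 < eps -> Bd (fun n x => phi (x + shift n) (psi n x) - Gphi phi (x + shift n)) A B eps.
Proof.
  intros Hphi HM HMb HP HMF HAB Hhc Hsep Hpsi Hdpsi Hder Happ eps Heps.
  assert (HIc := In_cont phi psi shift Hphi Hpsi).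
  destruct (classic (exists z, A <= z <= B /\ hh z = 0)) as [[z [Hz Hz0]]|Hno].
  2:{ apply good_interval with dpsi hh P MF M; auto. intros x Hx E. apply Hno; eauto. }
  set (eta := eps / (8 * (M + 1))). assert (Heta : 0 < eta) by (unfold eta; apply Rdiv_lt_0_compat; lra).
  set (l := Rmax A (z - eta)). set (r := Rmin B (z + eta)).
  assert (Hl1 : A <= l) by apply Rmax_l. assert (Hl2 : z - eta <= l) by apply Rmax_r.
  assert (Hr1 : r <= B) by apply Rmin_l. assert (Hr2 : r <= z + eta) by apply Rmin_r.
  assert (Hlz : l <= z) by (unfold l, Rmax; destruct (Rle_dec A (z - eta)); lra).
  assert (Hzr : z <= r) by (unfold r, Rmin; destruct (Rle_dec B (z + eta)); lra).
  replace eps with (eps/4 + eps/2 + eps/4) by field.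
  apply Bd_add with r; auto. apply Bd_add with l; auto.
  - destruct (Req_dec A l) as [E|E]. rewrite <- E. apply Bd_zero_len; auto; lra.
    assert (l = z - eta) by (unfold l, Rmax in *; destruct (Rle_dec A (z - eta)); lra).
    apply good_interval with dpsi hh P MF M; auto; try lra.
    intros x Hx E2. assert (x = z) by (apply Hsep; auto; lra). lra.
  - apply Bd_mono with ((2 * M) * (r - l)). 
    + apply Rle_trans with (2 * M * (2 * eta)). apply Rmult_le_compat_l; lra.
      unfold eta. replace (2 * M * (2 * (eps / (8 * (M + 1))))) with ((eps / 2) * (M / (M + 1))) by (field; lra).
      rewrite <- (Rmult_1_r (eps/2)) at 2. apply Rmult_le_compat_l; [lra|]. left; apply div_lt1; lra.
    + apply Bd_triv; auto; try lra. intros n x. apply In_bound; auto.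
  - destruct (Req_dec r B) as [E|E]. rewrite E. apply Bd_zero_len; auto; lra.
    assert (r = z + eta) by (unfold r, Rmin in *; destruct (Rle_dec B (z + eta)); lra).
    apply good_interval with dpsi hh P MF M; auto; try lra.
    intros x Hx E2. assert (x = z) by (apply Hsep; auto; lra). lra.
Qed.

Lemma global_bound (phi : R -> R -> R) (psi dpsi : nat -> R -> R) (hh : R -> R) (P : R) (shift : nat -> R) (MF M s : R) :
  cont_T2 phi -> 0 <= M -> (forall x y, Rabs (phi x y) <= M) -> 2 <= Rabs P -> 0 <= MF ->
  contR hh -> 0 < s ->
  (forall z1 z2, 0 <= z1 <= 1 -> 0 <= z2 <= 1 -> Rabs (z1 - z2) < s -> hh z1 = 0 -> hh z2 = 0 -> z1 = z2) ->
  (forall n, contR (psi n)) -> (forall n, contR (dpsi n)) ->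
  (forall n x, derivable_pt_lim (psi n) x (dpsi n x)) ->
  (forall n x, Rabs (dpsi n x / P ^ n - hh x) <= MF / Rabs P ^ n) ->
  Un_cv (fun n => Rint (fun x => phi (x + shift n) (psi n x) - Gphi phi (x + shift n)) 0 1) 0.
Proof.
  intros Hphi HM HMb HP HMF Hhc Hs Hsep Hpsi Hdpsi Hder Happ eps Heps.
  assert (HIc := In_cont phi psi shift Hphi Hpsi).
  destruct (archimed_cor1 s Hs) as [K [HK1 HK2]].
  assert (HKp : 0 < INR K) by (apply lt_0_INR; auto).
  assert (Hb : Bd (fun n x => phi (x + shift n) (psi n x) - Gphi phi (x + shift n)) 0 1 (INR K * (eps / 2 / INR K))).
  { apply Bd_pieces; auto; try lra. intros i Hi.
    assert (Hi' : INR (S i) <= INR K) by (apply le_INR; lia).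
    assert (0 <= INR i) by apply pos_INR.
    apply cell_bound with dpsi hh P MF M; auto.
    - rewrite S_INR. apply Rplus_le_compat_l. unfold Rdiv. apply Rmult_le_compat_r.
      left; apply Rinv_0_lt_compat; auto. lra.
    - intros z1 z2 Hz1 Hz2. rewrite S_INR in *. apply Hsep.
      + split. apply Rle_trans with (0 + INR i * (1 - 0) / INR K). apply Rplus_le_le_0_compat; [lra|].
        apply div_nonneg; lra. lra.
        apply Rle_trans with (0 + (INR i + 1) * (1 - 0) / INR K). lra.
        replace (0 + (INR i + 1) * (1 - 0) / INR K) with ((INR i + 1) / INR K) by (field; lra).
        apply Rmult_le_reg_r with (INR K); auto. unfold Rdiv; rewrite Rmult_assoc, Rinv_l; lra.
      + split. apply Rle_trans with (0 + INR i * (1 - 0) / INR K). apply Rplus_le_le_0_compat; [lra|].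
        apply div_nonneg; lra. lra.
        apply Rle_trans with (0 + (INR i + 1) * (1 - 0) / INR K). lra.
        replace (0 + (INR i + 1) * (1 - 0) / INR K) with ((INR i + 1) / INR K) by (field; lra).
        apply Rmult_le_reg_r with (INR K); auto. unfold Rdiv; rewrite Rmult_assoc, Rinv_l; lra.
      + replace (0 + (INR i + 1) * (1 - 0) / INR K) with (0 + INR i * (1 - 0) / INR K + / INR K) in *
          by (field; lra).
        apply Rabs_def1; lra.
    - apply Rdiv_lt_0_compat; lra. }
  destruct Hb as [N HN]. exists N. intros n Hn. unfold Rdist. rewrite Rminus_0_r.
  specialize (HN n Hn). replace (INR K * (eps / 2 / INR K)) with (eps/2) in HN by (field; lra). lra.
Qed.

Lemma lift_const F : contR F -> circle_lift F -> exists e : Z, forall x, F (x + 1) = F x + IZR e.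
Proof.
  intros Hc Hl. destruct (Hl 0) as [e He]. exists e. intros y. apply NNPP; intro Hne.
  destruct (Hl y) as [e' He'].
  assert (Hee : e' <> e) by (intro E; subst; lra).
  set (k := fun x => F (x + 1) - F x).
  assert (Hk : continuity k) by (intros x; unfold k; apply cpt_minus; [apply cpt_shift|]; apply Hc).
  set (c := if Z_lt_dec e e' then IZR e + / 2 else IZR e - / 2).
  assert (Hk0 : k 0 = IZR e) by (unfold k; lra). assert (Hky : k y = IZR e') by (unfold k; lra).
  assert (Hprod : (k 0 - c) * (k y - c) <= 0).
  { rewrite Hk0, Hky. unfold c. destruct (Z_lt_dec e e').
    - assert (IZR e + 1 <= IZR e') by (rewrite <- plus_IZR; apply IZR_le; lia). nra.
    - assert (IZR e' + 1 <= IZR e) by (rewrite <- plus_IZR; apply IZR_le; lia). nra. }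
  assert (Hg : continuity (fun x => k x - c)).
  { intros x. apply cpt_minus; [apply Hk|apply cpt_const]. }
  destruct (Rle_dec 0 y).
  - destruct (IVT_cor (fun x => k x - c) 0 y Hg r Hprod) as [z [Hz Hz0]].
    destruct (Hl z) as [e'' He''].
    assert (k z = c) by (cbv beta in Hz0; lra). unfold k in H. rewrite He'' in H.
    replace (F z + IZR e'' - F z) with (IZR e'') in H by ring. unfold c in H.
    destruct (Z_lt_dec e e').
    + assert (IZR (2 * e'') = IZR (2 * e + 1)) by (rewrite plus_IZR, !mult_IZR, H; field).
      apply eq_IZR in H0. lia.
    + assert (IZR (2 * e'') = IZR (2 * e - 1)) by (rewrite minus_IZR, !mult_IZR, H; field).
      apply eq_IZR in H0. lia.
  - destruct (IVT_cor (fun x => k x - c) y 0 Hg ltac:(lra) ltac:(rewrite Rmult_comm; auto)) as [z [Hz Hz0]].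
    destruct (Hl z) as [e'' He''].
    assert (k z = c) by (cbv beta in Hz0; lra). unfold k in H. rewrite He'' in H.
    replace (F z + IZR e'' - F z) with (IZR e'') in H by ring. unfold c in H.
    destruct (Z_lt_dec e e').
    + assert (IZR (2 * e'') = IZR (2 * e + 1)) by (rewrite plus_IZR, !mult_IZR, H; field).
      apply eq_IZR in H0. lia.
    + assert (IZR (2 * e'') = IZR (2 * e - 1)) by (rewrite minus_IZR, !mult_IZR, H; field).
      apply eq_IZR in H0. lia.
Qed.

Lemma D_periodic F : real_analytic F -> circle_lift F -> forall x, D F (x + 1) = D F x.
Proof.
  intros Ha Hl. destruct (lift_const F (ra_cont F Ha) Hl) as [e He]. intros x.
  apply (dpl_unique (fun t => F (t + 1)) x).
  - apply dpl_shift. apply ra_deriv; auto.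
  - apply dpl_ext with (fun t => F t + IZR e). intros; rewrite He; auto.
    replace (D F x) with (D F x + 0) by ring. apply dpl_plus. apply ra_deriv; auto. apply dpl_const.
Qed.

Fixpoint dy (alpha P : R) (dF dG : R -> R) (n : nat) (x : R) : R :=
  match n with
  | O => dG x
  | S k => P * dy alpha P dF dG k x + dF (x + INR k * alpha)
  end.

Fixpoint psum (alpha P : R) (dF : R -> R) (n : nat) (x : R) : R :=
  match n with
  | O => 0
  | S k => psum alpha P dF k x + / P ^ (S k) * dF (x + INR k * alpha)
  end.

Lemma orbit_deriv alpha P F Gamma n x :
  (forall x, derivable_pt_lim F x (D F x)) -> (forall x, derivable_pt_lim Gamma x (D Gamma x)) ->
  derivable_pt_lim (orbit_y alpha P F Gamma n) x (dy alpha P (D F) (D Gamma) n x).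
Proof.
  intros HF HG. revert x. induction n; intros x; simpl.
  - apply HG.
  - apply dpl_plus. apply dpl_scal; auto. apply dpl_shift; auto.
Qed.

Lemma dy_psum alpha P dF dG n x : P <> 0 ->
  dy alpha P dF dG n x / P ^ n = dG x + psum alpha P dF n x.
Proof.
  intros HP. induction n; simpl.
  - field.
  - assert (P ^ n <> 0) by (apply pow_nonzero; auto).
    replace ((P * dy alpha P dF dG n x + dF (x + INR n * alpha)) / (P * P ^ n)) with
      (dy alpha P dF dG n x / P ^ n + / (P * P ^ n) * dF (x + INR n * alpha)) by (field; auto).
    rewrite IHn. ring.
Qed.

Lemma dy_cont alpha P dF dG n : contR dF -> contR dG -> contR (dy alpha P dF dG n).
Proof.
  intros HF HG. induction n; simpl; auto.
  apply contR_plus. apply contR_scal; auto. apply contR_shift; auto.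
Qed.

Lemma psum_sum alpha P dF k x :
  psum alpha P dF (S k) x = sum_f_R0 (fun j => / P ^ (S j) * dF (x + INR j * alpha)) k.
Proof. induction k. simpl. ring. change (psum alpha P dF (S (S k)) x) with
  (psum alpha P dF (S k) x + / P ^ (S (S k)) * dF (x + INR (S k) * alpha)). rewrite IHk. reflexivity.
Qed.

Lemma wsum_conv (P MF : R) (g : nat -> R) : 2 <= Rabs P -> (forall j, Rabs (g j) <= MF) ->
  infinite_sum (fun j => / P ^ (S j) * g j) (Sum (fun j => / P ^ (S j) * g j)) /\
  forall n, Rabs (Sum (fun j => / P ^ (S j) * g j) -
     match n with O => 0 | S k => sum_f_R0 (fun j => / P ^ (S j) * g j) k end) <= MF / Rabs P ^ n.
Proof.
  intros HP Hg. set (th := / Rabs P).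
  assert (Hth : 0 < th <= / 2) by (unfold th; split; [apply Rinv_0_lt_compat; lra|apply Rinv_le_contravar; lra]).
  assert (HMF : 0 <= MF) by (specialize (Hg 0%nat); assert (0 <= Rabs (g 0%nat)) by apply Rabs_pos; lra).
  assert (Hmaj : forall j, Rabs (/ P ^ (S j) * g j) <= (MF * th) * th ^ j).
  { intros j. rewrite Rabs_mult, Rabs_inv, Rabs_pow_P.
    replace (MF * th * th ^ j) with (th ^ (S j) * MF) by (simpl; ring).
    unfold th. rewrite <- pow_inv. apply Rmult_le_compat_l; auto. apply pow_le; left; apply Rinv_0_lt_compat; lra. }
  assert (Hv : infinite_sum (fun j => (MF * th) * th ^ j) (MF * th / (1 - th))) by (apply is_geom; lra).
  assert (Hs : infinite_sum (fun j => / P ^ (S j) * g j) (Sum (fun j => / P ^ (S j) * g j))).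
  { apply Sum_spec. exact (is_exists_abs _ _ _ Hmaj Hv). }
  split; auto. intros n.
  assert (Hk : MF * th / (1 - th) <= MF).
  { apply Rmult_le_reg_r with (1 - th); [lra|]. unfold Rdiv. rewrite Rmult_assoc, Rinv_l by lra. nra. }
  assert (Ethn : forall k, MF / Rabs P ^ k = MF * th ^ k).
  { intros k. unfold th, Rdiv. rewrite pow_inv. auto. }
  destruct n as [|k].
  - rewrite Rminus_0_r. change (Rabs P ^ 0) with 1. rewrite Rdiv_1_r.
    destruct (is_comp _ _ _ Hmaj Hv) as [l [Hl1 Hl2]]. rewrite (is_unique _ _ _ Hs Hl1). lra.
  - eapply Rle_trans. apply (is_tail_bound _ _ _ _ k Hmaj Hs Hv).
    rewrite sum_scal_l, sum_geom by lra. rewrite Ethn.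
    replace (MF * th / (1 - th) - MF * th * ((1 - th ^ S k) / (1 - th))) with
      (MF * th ^ S k * (th / (1 - th))) by (simpl; field; lra).
    rewrite <- (Rmult_1_r (MF * th ^ S k)) at 2. apply Rmult_le_compat_l.
    apply Rmult_le_pos; auto; apply pow_le; lra.
    apply Rmult_le_reg_r with (1 - th); [lra|]. unfold Rdiv. rewrite Rmult_assoc, Rinv_l by lra. lra.
Qed.

Theorem mainTheorem17 (alpha : R) (p : Z) (F Gamma : R -> R) :
  irrational alpha ->
  (2 <= Z.abs p)%Z ->
  circle_lift F -> real_analytic F ->
  circle_lift Gamma -> real_analytic Gamma ->
  pushforward_equidistributes alpha (IZR p) F Gamma \/
  (exists c : R, forall x : R, exists k : Z,
     F x = Gamma (x + alpha) - IZR p * Gamma x + c + IZR k).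
Proof.
  intros _ Hp HlF HaF HlG HaG.
  set (P := IZR p).
  assert (HP : 2 <= Rabs P) by (unfold P; rewrite <- abs_IZR; apply (IZR_le 2); lia).
  assert (HP0 : P <> 0) by (intro E; rewrite E, Rabs_R0 in HP; lra).
  set (dF := D F). set (dG := D Gamma).
  assert (HdF : forall x, derivable_pt_lim F x (dF x)) by (apply ra_deriv; auto).
  assert (HdG : forall x, derivable_pt_lim Gamma x (dG x)) by (apply ra_deriv; auto).
  assert (HpF : forall x, dF (x + 1) = dF x) by (apply D_periodic; auto).
  assert (HadF : real_analytic dF) by (apply ra_D; auto).
  assert (HadG : real_analytic dG) by (apply ra_D; auto).
  assert (HcdF : contR dF) by (apply ra_cont; auto).
  assert (HcdG : contR dG) by (apply ra_cont; auto).
  destruct (per_bound dF HcdF HpF) as [MF [HMF HMFb]].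
  set (u := fun x j => / P ^ (S j) * dF (x + INR j * alpha)).
  set (hh := fun x => dG x + Sum (u x)).
  assert (Hwc : forall x, infinite_sum (u x) (Sum (u x)) /\
     forall n, Rabs (Sum (u x) - match n with O => 0 | S k => sum_f_R0 (u x) k end) <= MF / Rabs P ^ n).
  { intros x. apply (wsum_conv P MF (fun j => dF (x + INR j * alpha))); auto. }
  assert (Hra : real_analytic hh).
  { destruct (ua_periodic dF HadF HpF) as [s [Cc [Hs [HC Hua]]]].
    set (th := / Rabs P).
    assert (Hth : 0 < th <= /2) by (unfold th; split; [apply Rinv_0_lt_compat; lra|apply Rinv_le_contravar; lra]).
    assert (HW : infinite_sum (fun j => Rabs (/ P ^ (S j))) (th / (1 - th))).
    { apply is_ext with (fun j => th * th ^ j). intros j. rewrite Rabs_inv, Rabs_pow_P. unfold th.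
      rewrite <- pow_inv. reflexivity. apply is_geom; lra. }
    assert (H := ua_wsum dF s Cc (fun j => / P ^ (S j)) _ (fun j => INR j * alpha) Hs HC Hua HW).
    assert (H2 := ra_lin dG _ 1 HadG H).
    replace hh with (fun x => dG x + 1 * Sum (fun j => / P ^ (S j) * dF (x + INR j * alpha))); auto.
    apply functional_extensionality; intros x. unfold hh, u. ring. }
  assert (Hhc : contR hh) by (apply ra_cont; auto).
  assert (Happ : forall n x, Rabs (dy alpha P dF dG n x / P ^ n - hh x) <= MF / Rabs P ^ n).
  { intros n x. rewrite dy_psum by auto. unfold hh.
    destruct (Hwc x) as [_ H]. specialize (H n). rewrite <- Rabs_Ropp.
    replace (- (dG x + psum alpha P dF n x - (dG x + Sum (u x)))) with (Sum (u x) - psum alpha P dF n x) by ring.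
    destruct n. simpl. auto. rewrite psum_sum. auto. }
  destruct (classic (exists x, accum hh x)) as [[x0 Hacc]|Hnacc].
  -
    right. assert (Hz := ra_identity hh x0 Hra Hacc).
    set (Dfun := fun x => Gamma (x + alpha) - P * Gamma x - F x).
    assert (Hkey : forall x, Sum (u (x + alpha)) = P * Sum (u x) - dF x).
    { intros x. destruct (Hwc x) as [H1 _]. destruct (Hwc (x + alpha)) as [H2 _].
      assert (H3 := is_shift _ _ (is_scal _ _ P H1)). cbv beta in H3.
      apply (is_unique (u (x + alpha))); auto.
      replace (P * Sum (u x) - dF x) with (P * Sum (u x) - P * u x 0%nat).
      apply is_ext with (2 := H3). intros j. unfold u. rewrite S_INR.
      replace (x + (INR j + 1) * alpha) with (x + alpha + INR j * alpha) by ring. simpl. field.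
      split; auto. apply pow_nonzero; auto.
      unfold u. simpl. replace (x + 0 * alpha) with x by ring. field; auto. }
    assert (Hder : forall x, derivable_pt_lim Dfun x 0).
    { intros x. unfold Dfun.
      assert (H := dpl_minus _ _ x _ _ (dpl_minus _ _ x _ _ (dpl_shift Gamma alpha x _ (HdG (x + alpha)))
                     (dpl_scal _ x _ P (HdG x))) (HdF x)).
      replace 0 with (dG (x + alpha) - P * dG x - dF x); auto.
      assert (E1 := Hz (x + alpha)). assert (E2 := Hz x). unfold hh in E1, E2.
      rewrite Hkey in E1. nra. }
    exists (- Dfun 0). intros x. exists 0%Z.
    assert (E := zero_deriv_const2 Dfun 0 x Hder). unfold Dfun in E |- *. simpl. unfold P in *. lra.
  -
    left.
    assert (Hiso : forall x, exists d, 0 < d /\ forall z, 0 < Rabs (z - x) < d -> hh z <> 0).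
    { intros x. apply NNPP; intro N. apply Hnacc. exists x. intros d Hd.
      apply NNPP; intro N2. apply N. exists d. split; auto. intros z Hz E. apply N2. exists z; auto. }
    destruct (gauge_unif (fun y s => forall z1 z2, Rabs (z1 - y) < s -> Rabs (z2 - y) < s ->
                hh z1 = 0 -> hh z2 = 0 -> z1 = z2)) as [s [Hs Hss]].
    + intros y s s' H1 H2 z1 z2 Hz1 Hz2. apply H1; lra.
    + intros x _. destruct (Hiso x) as [d [Hd Hdd]]. exists (d/2). split; [lra|].
      intros y Hy z1 z2 Hz1 Hz2 E1 E2.
      assert (z1 = x).
      { apply NNPP; intro N. apply (Hdd z1); auto. split. apply Rabs_pos_lt; lra.
        apply Rabs_lt_inv in Hy. apply Rabs_lt_inv in Hz1. apply Rabs_def1; lra. }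
      assert (z2 = x).
      { apply NNPP; intro N. apply (Hdd z2); auto. split. apply Rabs_pos_lt; lra.
        apply Rabs_lt_inv in Hy. apply Rabs_lt_inv in Hz2. apply Rabs_def1; lra. }
      congruence.
    + intros phi Hphi.
      destruct (phi_bound phi Hphi) as [M [HM HMb]].
      assert (Hpsi : forall n, contR (orbit_y alpha P F Gamma n)).
      { intros n x. apply dpl_cont with (dy alpha P dF dG n x). apply orbit_deriv; auto. }
      assert (Hg := global_bound phi (fun n => orbit_y alpha P F Gamma n) (fun n => dy alpha P dF dG n) hh P
                  (fun n => INR n * alpha) MF M s Hphi HM HMb HP HMF Hhc Hs
                  ltac:(intros z1 z2 Hz1 Hz2 Hzz E1 E2; apply (Hss z1 Hz1 z1 z2);
                        [rewrite Rminus_diag, Rabs_R0; auto | rewrite Rabs_minus_sym; auto | auto | auto])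
                  Hpsi (fun n => dy_cont alpha P dF dG n HcdF HcdG)
                  ltac:(intros; apply orbit_deriv; auto) Happ).
      cbv beta in Hg.
      apply cv_ext with (fun n => Rint (fun x => phi (x + INR n * alpha) (orbit_y alpha P F Gamma n x)
                   - Gphi phi (x + INR n * alpha)) 0 1 + leb_T2 phi).
      * intros n. unfold push_integral. rewrite Rint_minus.
        rewrite Rint_shift_per. unfold leb_T2, Gphi. ring.
        apply Gphi_cont; auto. apply Gphi_per; auto.
        apply cont_comp2; auto. intros x; apply cpt_plus; [apply cpt_id|apply cpt_const].
        apply contR_shift, Gphi_cont; auto.
      * assert (Hc : Un_cv (fun _ => leb_T2 phi) (leb_T2 phi)).
        { intros e He; exists 0%nat; intros; unfold Rdist; rewrite Rminus_diag, Rabs_R0; auto. }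
        assert (H := CV_plus _ _ _ _ Hg Hc). rewrite Rplus_0_l in H. exact H.
Qed.
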